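(* Let $n\ge 3$ be an integer, $r\in\mathbb R$, and define $G_n(x;r)=\bigl((-1)^{n+1}\psi_2^{(n)}(x)\bigr)^r$ for $x>0$. Then: (1) $x\mapsto G_n(x;r)$ is strictly convex on $(0,\infty)$ for $r\in\left(-\infty,-\frac{1}{n-1}\right)\cup(0,\infty)$, and strictly concave on $(0,\infty)$ for $r\in\left(-\frac{1}{n+1},0\right)$. (2) For $r\in\left(-\infty,-\frac{1}{n-1}\right)$ and all $x,y>0$, $$\bigl((-1)^{n+1}\psi_2^{(n)}(x)\bigr)^r+\bigl((-1)^{n+1}\psi_2^{(n)}(y)\bigr)^r<\bigl((-1)^{n+1}\psi_2^{(n)}(x+y)\bigr)^r.$$ (3) For $r\in\left(-\frac{1}{n+1},0\right)$ and all $x,y>0$, $$\bigl((-1)^{n+1}\psi_2^{(n)}(x)\bigr)^r+\bigl((-1)^{n+1}\psi_2^{(n)}(y)\bigr)^r>\bigl((-1)^{n+1}\psi_2^{(n)}(x+y)\bigr)^r.$$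
   Context: For an integer $n\ge 2$ and $x>0$, the poly-double gamma function is defined by $$\psi_2^{(n)}(x)=(-1)^{n+1}\,n!\sum_{k=0}^{\infty}\frac{1+k}{(x+k)^{n+1}} .$$ Note that $(-1)^{n+1}\psi_2^{(n)}(x)>0$ for $x>0$. *)

(* Defs.v *)
From Stdlib Require Import Reals.
From Coquelicot Require Import Coquelicot.
Open Scope R_scope.

Definition psi2 (n : nat) (x : R) : R :=
  (-1) ^ (n + 1) * INR (Factorial.fact n) *
  Series (fun k : nat => (1 + INR k) / (x + INR k) ^ (n + 1)).

Definition G (n : nat) (r x : R) : R :=
  Rpower ((-1) ^ (n + 1) * psi2 n x) r.

Definition strictly_convex_pos (f : R -> R) : Prop :=
  forall x y t, 0 < x -> 0 < y -> x <> y -> 0 < t < 1 ->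
    f (t * x + (1 - t) * y) < t * f x + (1 - t) * f y.

Definition strictly_concave_pos (f : R -> R) : Prop :=
  forall x y t, 0 < x -> 0 < y -> x <> y -> 0 < t < 1 ->
    t * f x + (1 - t) * f y < f (t * x + (1 - t) * y).

(* Main.v *)
Require Import Defs.
From Stdlib Require Import Reals Lra Lia.
From Coquelicot Require Import Coquelicot.
Open Scope R_scope.

Lemma mvt_closed (h h' : R -> R) (a b : R) : a <= b ->
  (forall x, a <= x <= b -> is_derive h x (h' x)) ->
  exists c, a <= c <= b /\ h b - h a = h' c * (b - a).
Proof.
  intros Hab Hd.
  destruct (MVT_gen h a b h') as [c [Hc Heq]].
  - intros x Hx. apply Hd. rewrite Rmin_left in Hx by lra. rewrite Rmax_right in Hx by lra. lra.
  - intros x Hx. rewrite Rmin_left in Hx by lra. rewrite Rmax_right in Hx by lra.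
    apply continuity_pt_filterlim. apply (ex_derive_continuous h x).
    eexists. apply Hd. lra.
  - exists c. rewrite Rmin_left in Hc by lra. rewrite Rmax_right in Hc by lra. split; auto.
Qed.

Lemma mvt_any (h h' : R -> R) (a b : R) :
  (forall x, Rmin a b <= x <= Rmax a b -> is_derive h x (h' x)) ->
  exists c, Rmin a b <= c <= Rmax a b /\ h b - h a = h' c * (b - a).
Proof.
  intros Hd.
  destruct (MVT_gen h a b h') as [c [Hc Heq]].
  - intros x Hx. apply Hd. lra.
  - intros x Hx.
    apply continuity_pt_filterlim. apply (ex_derive_continuous h x).
    eexists. apply Hd. lra.
  - exists c. split; auto.
Qed.

Lemma tangent_le (h h' : R -> R) :
  (forall x, 0 < x -> is_derive h x (h' x)) ->
  (forall a b, 0 < a -> a <= b -> h' a <= h' b) ->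
  forall c z, 0 < c -> 0 < z -> h c + h' c * (z - c) <= h z.
Proof.
  intros Hd Hm c z Hc Hz.
  destruct (mvt_any h h' c z) as [xi [Hxi Heq]].
  { intros x Hx. apply Hd. destruct (Rle_dec c z).
    rewrite Rmin_left in Hx; lra. rewrite Rmin_right in Hx; lra. }
  destruct (Rle_dec c z) as [Hcz|Hcz].
  - rewrite Rmin_left in Hxi by lra. rewrite Rmax_right in Hxi by lra.
    assert (h' c <= h' xi) by (apply Hm; lra).
    assert (h' c * (z - c) <= h' xi * (z - c)) by (apply Rmult_le_compat_r; lra).
    lra.
  - rewrite Rmin_right in Hxi by lra. rewrite Rmax_left in Hxi by lra.
    assert (h' xi <= h' c) by (apply Hm; lra).
    assert (h' c * (z - c) <= h' xi * (z - c)).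
    { assert (h' c * (c - z) >= h' xi * (c - z)) by (apply Rle_ge, Rmult_le_compat_r; lra). lra. }
    lra.
Qed.

Lemma tangent_lt (h h' : R -> R) :
  (forall x, 0 < x -> is_derive h x (h' x)) ->
  (forall a b, 0 < a -> a < b -> h' a < h' b) ->
  forall c z, 0 < c -> 0 < z -> z <> c -> h c + h' c * (z - c) < h z.
Proof.
  intros Hd Hm c z Hc Hz Hne.
  set (w := (c + z) / 2).
  assert (Hw : 0 < w) by (unfold w; lra).
  assert (Hd' : forall a b, 0 < a -> 0 < b -> forall x, Rmin a b <= x <= Rmax a b -> is_derive h x (h' x)).
  { intros a b Ha Hb x Hx. apply Hd. destruct (Rle_dec a b).
    rewrite Rmin_left in Hx; lra. rewrite Rmin_right in Hx; lra. }
  destruct (mvt_any h h' c w (Hd' c w Hc Hw)) as [x1 [Hx1 E1]].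
  destruct (mvt_any h h' w z (Hd' w z Hw Hz)) as [x2 [Hx2 E2]].
  destruct (Rlt_dec c z) as [Hcz|Hcz].
  - assert (c < w < z) by (unfold w; lra).
    rewrite Rmin_left in Hx1 by lra. rewrite Rmax_right in Hx1 by lra.
    rewrite Rmin_left in Hx2 by lra. rewrite Rmax_right in Hx2 by lra.
    assert (h' c <= h' x1).
    { destruct (Req_dec c x1). subst; lra. apply Rlt_le, Hm; lra. }
    assert (h' c < h' x2) by (apply Hm; lra).
    assert (h' c * (w - c) <= h' x1 * (w - c)) by (apply Rmult_le_compat_r; lra).
    assert (h' c * (z - w) < h' x2 * (z - w)) by (apply Rmult_lt_compat_r; lra).
    lra.
  - assert (z < w < c) by (unfold w; lra).
    rewrite Rmin_right in Hx1 by lra. rewrite Rmax_left in Hx1 by lra.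
    rewrite Rmin_right in Hx2 by lra. rewrite Rmax_left in Hx2 by lra.
    assert (h' x1 <= h' c).
    { destruct (Req_dec c x1). subst; lra. apply Rlt_le, Hm; lra. }
    assert (h' x2 < h' c) by (apply Hm; lra).
    assert (h' x1 * (c - w) <= h' c * (c - w)) by (apply Rmult_le_compat_r; lra).
    assert (h' x2 * (w - z) < h' c * (w - z)) by (apply Rmult_lt_compat_r; lra).
    lra.
Qed.

Lemma convex_of_deriv (h h' : R -> R) :
  (forall x, 0 < x -> is_derive h x (h' x)) ->
  (forall a b, 0 < a -> a <= b -> h' a <= h' b) ->
  forall x y t, 0 < x -> 0 < y -> 0 < t < 1 ->
    h (t * x + (1 - t) * y) <= t * h x + (1 - t) * h y.
Proof.
  intros Hd Hm x y t Hx Hy Ht.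
  set (c := t * x + (1 - t) * y).
  assert (Hc : 0 < c) by (unfold c; nra).
  pose proof (tangent_le h h' Hd Hm c x Hc Hx).
  pose proof (tangent_le h h' Hd Hm c y Hc Hy).
  assert (E : t * (h c + h' c * (x - c)) + (1 - t) * (h c + h' c * (y - c)) = h c)
    by (unfold c; ring).
  nra.
Qed.

Lemma sconvex_of_deriv (h h' : R -> R) :
  (forall x, 0 < x -> is_derive h x (h' x)) ->
  (forall a b, 0 < a -> a < b -> h' a < h' b) ->
  forall x y t, 0 < x -> 0 < y -> x <> y -> 0 < t < 1 ->
    h (t * x + (1 - t) * y) < t * h x + (1 - t) * h y.
Proof.
  intros Hd Hm x y t Hx Hy Hxy Ht.
  set (c := t * x + (1 - t) * y).
  assert (Hc : 0 < c) by (unfold c; nra).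
  assert (x <> c). { unfold c; intro E. apply Hxy. nra. }
  assert (y <> c). { unfold c; intro E. apply Hxy. nra. }
  pose proof (tangent_lt h h' Hd Hm c x Hc Hx H).
  pose proof (tangent_lt h h' Hd Hm c y Hc Hy H0).
  assert (E : t * (h c + h' c * (x - c)) + (1 - t) * (h c + h' c * (y - c)) = h c)
    by (unfold c; ring).
  nra.
Qed.

Lemma incr_of_deriv (h h' : R -> R) :
  (forall x, 0 < x -> is_derive h x (h' x)) ->
  (forall x, 0 < x -> 0 <= h' x) ->
  forall a b, 0 < a -> a <= b -> h a <= h b.
Proof.
  intros Hd Hp a b Ha Hab.
  destruct (mvt_closed h h' a b Hab) as [c [Hc E]].
  { intros; apply Hd; lra. }
  assert (0 <= h' c) by (apply Hp; lra). nra.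
Qed.

Lemma sincr_of_deriv (h h' : R -> R) :
  (forall x, 0 < x -> is_derive h x (h' x)) ->
  (forall x, 0 < x -> 0 < h' x) ->
  forall a b, 0 < a -> a < b -> h a < h b.
Proof.
  intros Hd Hp a b Ha Hab.
  destruct (mvt_closed h h' a b) as [c [Hc E]]. lra.
  { intros; apply Hd; lra. }
  assert (0 < h' c) by (apply Hp; lra). nra.
Qed.

Ltac nz := repeat split; try lra; try (intro; lra); try (repeat (apply Rmult_integral_contrapositive_currified || apply pow_nonzero); lra).

Lemma pow_pos_lt (y : R) (p : nat) : 0 < y -> 0 < y ^ p.
Proof. intros; apply pow_lt; auto. Qed.

Lemma deriv_invpow (u : R) (p : nat) : 0 < u ->
  is_derive (fun s => / s ^ p) u (- INR p / u ^ (S p)).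
Proof.
  intros Hu. auto_derive.
  - nz.
  - destruct p.
    + simpl. field; nz.
    + rewrite ?S_INR. cbn [pred pow]. field; nz.
Qed.



Lemma deriv_invpow_shift (u s : R) (p : nat) : 0 < u + s ->
  is_derive (fun s => / (u + s) ^ p) s (- INR p / (u + s) ^ (S p)).
Proof.
  intros Hu. auto_derive.
  - nz.
  - destruct p.
    + simpl. field; nz.
    + rewrite ?S_INR. cbn [pred pow]. field; nz.
Qed.

Lemma taylor_invpow (u h : R) (p : nat) : 0 < u -> Rabs h <= u / 2 ->
  Rabs (/ (u + h) ^ p - / u ^ p + INR p * h / u ^ (S p))
    <= h ^ 2 * (INR p * INR (S p) * 2 ^ (p + 2) / u ^ (p + 2)).
Proof.
  intros Hu Hh.
  set (C := INR p * INR (S p) * 2 ^ (p + 2) / u ^ (p + 2)).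
  assert (HC : 0 <= C).
  { unfold C. apply Rmult_le_pos. repeat apply Rmult_le_pos; try apply pos_INR.
    apply pow_le; lra. left; apply Rinv_0_lt_compat, pow_lt; lra. }
  set (k := fun s => / (u + s) ^ p - / u ^ p + INR p * s / u ^ (S p)).
  set (k' := fun s => - INR p / (u + s) ^ (S p) + INR p / u ^ (S p)).
  assert (Hrange : forall s, Rmin 0 h <= s <= Rmax 0 h -> 0 < u + s /\ u / 2 <= u + s).
  { intros s Hs. assert (Rabs s <= Rabs h).
    { destruct (Rle_dec 0 h).
      - rewrite Rmin_left in Hs by lra. rewrite Rmax_right in Hs by lra.
        rewrite !Rabs_right; lra.
      - rewrite Rmin_right in Hs by lra. rewrite Rmax_left in Hs by lra.
        rewrite (Rabs_left h) by lra. unfold Rabs; destruct (Rcase_abs s); lra. }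
    pose proof (Rabs_le_between' s 0 (u/2)). split_Rabs; lra. }
  destruct (mvt_any k k' 0 h) as [c [Hc E1]].
  { intros s Hs. destruct (Hrange s Hs) as [H1 _].
    unfold k, k'. auto_derive.
    - nz.
    - destruct p.
      + simpl. field; nz.
      + rewrite ?S_INR. cbn [pred pow]. field; nz. }
  set (g2 := fun s => - INR p / (u + s) ^ (S p)).
  set (g2' := fun s => INR p * INR (S p) / (u + s) ^ (S (S p))).
  assert (Hcr : Rmin 0 c <= Rmax 0 c -> True) by auto.
  destruct (mvt_any g2 g2' 0 c) as [d [Hd E2]].
  { intros s Hs. assert (Rmin 0 h <= s <= Rmax 0 h).
    { destruct (Rle_dec 0 h); destruct (Rle_dec 0 c);
      repeat first [rewrite Rmin_left in * by lra | rewrite Rmin_right in * by lra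
                   | rewrite Rmax_left in * by lra | rewrite Rmax_right in * by lra]; lra. }
    destruct (Hrange s H) as [H1 _].
    unfold g2, g2'. auto_derive.
    - nz.
    - change (match p with 0%nat => 1 | S _ => INR p + 1 end) with (INR (S p)).
      rewrite ?S_INR. cbn [pred pow]. field; nz. }
  assert (Hdr : Rmin 0 h <= d <= Rmax 0 h).
  { destruct (Rle_dec 0 h); destruct (Rle_dec 0 c);
      repeat first [rewrite Rmin_left in * by lra | rewrite Rmin_right in * by lra
                   | rewrite Rmax_left in * by lra | rewrite Rmax_right in * by lra]; lra. }
  destruct (Hrange d Hdr) as [Hd1 Hd2]. destruct (Hrange c Hc) as [Hc1 Hc2].
  assert (Hk0 : k 0 = 0) by (unfold k; rewrite Rplus_0_r; field; nz).
  assert (Hk'c : k' c = g2 c - g2 0).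
  { unfold k', g2. rewrite Rplus_0_r. field; nz. }
  assert (Hinv : / (u + d) ^ (p + 2) <= 2 ^ (p + 2) / u ^ (p + 2)).
  { assert (E : 2 ^ (p + 2) / u ^ (p + 2) = / (u / 2) ^ (p + 2)).
    { unfold Rdiv. rewrite Rpow_mult_distr, pow_inv. field. nz. }
    rewrite E. apply Rinv_le_contravar. apply pow_lt; lra. apply pow_incr; lra. }
  assert (Hg2' : 0 <= g2' d <= C).
  { unfold g2', C. replace (S (S p)) with (p + 2)%nat by lia.
    assert (0 <= INR p * INR (S p)) by (apply Rmult_le_pos; apply pos_INR).
    assert (0 < / (u + d) ^ (p + 2)) by (apply Rinv_0_lt_compat, pow_lt; lra).
    unfold Rdiv at 1. split. nra.
    replace (INR p * INR (S p) * 2 ^ (p + 2) / u ^ (p + 2)) with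
      (INR p * INR (S p) * (2 ^ (p + 2) / u ^ (p + 2))) by (unfold Rdiv; ring).
    apply Rmult_le_compat_l; auto. }
  assert (Hcd : Rabs c <= Rabs h).
  { destruct (Rle_dec 0 h).
    - rewrite Rmin_left in Hc by lra. rewrite Rmax_right in Hc by lra.
      rewrite !Rabs_right; lra.
    - rewrite Rmin_right in Hc by lra. rewrite Rmax_left in Hc by lra.
      rewrite (Rabs_left h) by lra. unfold Rabs; destruct (Rcase_abs c); lra. }
  change (Rabs (k h) <= h ^ 2 * C).
  rewrite <- (Rminus_0_r (k h)), <- Hk0, E1, Hk'c, E2.
  rewrite Rminus_0_r.
  rewrite !Rabs_mult. rewrite (Rabs_right (g2' d)) by lra.
  rewrite !Rminus_0_r.
  assert (g2' d * Rabs c <= C * Rabs h)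
    by (apply Rmult_le_compat; try lra; apply Rabs_pos).
  assert (Rabs h * Rabs h = h ^ 2) by (rewrite <- Rabs_mult, Rabs_right; [ring | nra]).
  assert (0 <= Rabs h) by apply Rabs_pos.
  nra.
Qed.

Lemma pow_lt_compat (x y : R) (n : nat) : 0 <= x -> x < y -> (1 <= n)%nat -> x ^ n < y ^ n.
Proof.
  intros Hx Hxy Hn. induction n. lia.
  destruct n. simpl; lra.
  assert (x ^ S n < y ^ S n) by (apply IHn; lia).
  simpl in *. assert (0 <= x * x ^ n) by (apply Rmult_le_pos; auto; apply pow_le; auto). nra.
Qed.

Definition trm (p : nat) (x : R) (k : nat) : R := (1 + INR k) / (x + INR k) ^ p.
Definition T (p : nat) (x : R) : R := Series (trm p x).

Lemma Series_nonneg (a : nat -> R) : (forall n, 0 <= a n) -> ex_series a -> 0 <= Series a.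
Proof.
  intros H He.
  assert (E : Series (fun _ : nat => 0 * 0) = 0) by (rewrite Series_scal_l; ring).
  rewrite <- E. apply Series_le; auto. intros; split; [lra | rewrite Rmult_0_l; auto].
Qed.

Lemma is_lim_seq_is_series (a : nat -> R) (l : R) :
  is_lim_seq (sum_n a) l -> is_series a l.
Proof. intros H. exact H. Qed.

Lemma telescope_series :
  is_series (fun k => / (INR k + 1) - / (INR k + 2)) 1.
Proof.
  apply is_lim_seq_is_series.
  apply is_lim_seq_ext with (fun n => 1 - / (INR n + 2)).
  - induction n.
    + rewrite sum_O. simpl. field.
    + rewrite sum_Sn, <- IHn. rewrite S_INR. unfold plus; simpl. field.
      split; pose proof (pos_INR n); lra.
  - assert (H : is_lim_seq (fun n => 1 - / (INR n + 2)) (1 - 0)).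
    2: { replace (1 - 0) with 1 in H by ring. exact H. }
    apply is_lim_seq_minus'.
    apply is_lim_seq_const.
    replace (Finite 0) with (Rbar_inv p_infty) by reflexivity.
    apply is_lim_seq_inv.
    + eapply is_lim_seq_le_p_loc with INR.
      * exists 0%nat. intros; lra.
      * apply is_lim_seq_INR.
    + discriminate.
Qed.

Lemma ex_telescope4 : ex_series (fun k => 4 * (/ (INR k + 1) - / (INR k + 2))).
Proof.
  exists (scal 4 1). apply (is_series_scal_l 4 _ 1). apply telescope_series.
Qed.

Lemma trm_pos (p : nat) (x : R) (k : nat) : 0 < x -> 0 < trm p x k.
Proof.
  intros Hx. unfold trm. pose proof (pos_INR k).
  apply Rdiv_lt_0_compat. lra. apply pow_lt. lra.
Qed.

Lemma trm_S_bound (p : nat) (x : R) (k : nat) : (3 <= p)%nat -> 0 <= x ->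
  trm p x (S k) <= 4 * (/ (INR k + 1) - / (INR k + 2)).
Proof.
  intros Hp Hx. unfold trm. rewrite S_INR.
  pose proof (pos_INR k) as Hk.
  set (a := INR k + 1). assert (Ha : 1 <= a) by (unfold a; lra).
  replace (INR k + 2) with (a + 1) by (unfold a; ring).
  replace (1 + (a)) with (a + 1) by ring.
  assert (H1 : a ^ 3 <= (x + a) ^ p).
  { apply Rle_trans with (a ^ p).
    - replace p with (3 + (p - 3))%nat by lia. rewrite pow_add.
      assert (1 <= a ^ (p - 3)) by (apply pow_R1_Rle; lra).
      assert (0 < a ^ 3) by (apply pow_lt; lra). nra.
    - apply pow_incr; lra. }
  assert (H2 : 0 < a ^ 3) by (apply pow_lt; lra).
  replace (4 * (/ a - / (a + 1))) with (4 / (a * (a + 1))) by (field; lra).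
  apply Rle_trans with ((a + 1) / a ^ 3).
  - unfold Rdiv. apply Rmult_le_compat_l. lra.
    apply Rinv_le_contravar; lra.
  - apply (Rmult_le_reg_r (a ^ 3 * (a * (a + 1)))). nra.
    field_simplify; try lra. simpl. nra.
Qed.

Lemma ex_T (p : nat) (x : R) : (3 <= p)%nat -> 0 < x -> ex_series (trm p x).
Proof.
  intros Hp Hx. apply ex_series_incr_1.
  apply (@ex_series_le R_AbsRing R_CompleteNormedModule _ (fun k => 4 * (/ (INR k + 1) - / (INR k + 2)))).
  - intros k. replace (norm (trm p x (S k))) with (Rabs (trm p x (S k))) by reflexivity. rewrite Rabs_right.
    apply trm_S_bound; [auto | lra]. left; apply trm_pos; auto.
  - apply ex_telescope4.
Qed.

Lemma ex_T_S (p : nat) (x : R) : (3 <= p)%nat -> 0 < x -> ex_series (fun k => trm p x (S k)).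
Proof. intros. apply (proj1 (ex_series_incr_1 (trm p x))). apply ex_T; auto. Qed.

Lemma T_pos (p : nat) (x : R) : (3 <= p)%nat -> 0 < x -> 0 < T p x.
Proof.
  intros Hp Hx. unfold T. rewrite Series_incr_1 by (apply ex_T; auto).
  pose proof (trm_pos p x 0 Hx).
  assert (0 <= Series (fun k => trm p x (S k))).
  { apply Series_nonneg. intros; left; apply trm_pos; auto.
    apply ex_T_S; auto. }
  lra.
Qed.

Lemma T_ge_first (p : nat) (x : R) : (3 <= p)%nat -> 0 < x -> / x ^ p <= T p x.
Proof.
  intros Hp Hx. unfold T. rewrite Series_incr_1 by (apply ex_T; auto).
  assert (0 <= Series (fun k => trm p x (S k))).
  { apply Series_nonneg. intros; left; apply trm_pos; auto.
    apply ex_T_S; auto. }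
  assert (trm p x 0 = / x ^ p) by (unfold trm; simpl INR; rewrite !Rplus_0_r; unfold Rdiv; ring). lra.
Qed.

Lemma trm_decr (p : nat) (x y : R) (k : nat) : 0 < x -> x <= y -> trm p y k <= trm p x k.
Proof.
  intros Hx Hxy. unfold trm. pose proof (pos_INR k).
  unfold Rdiv. apply Rmult_le_compat_l. lra.
  apply Rinv_le_contravar. apply pow_lt; lra. apply pow_incr; lra.
Qed.

Lemma T_sdecr (p : nat) (x y : R) : (1 <= p)%nat -> (3 <= p)%nat -> 0 < x -> x < y -> T p y < T p x.
Proof.
  intros H1 Hp Hx Hxy. unfold T.
  rewrite (Series_incr_1 (trm p x)) by (apply ex_T; auto).
  rewrite (Series_incr_1 (trm p y)) by (apply ex_T; [auto | lra]).
  assert (Series (fun k => trm p y (S k)) <= Series (fun k => trm p x (S k))).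
  { apply Series_le. intros; split. left; apply trm_pos; lra. apply trm_decr; lra.
    apply ex_T_S; auto. }
  assert (trm p y 0 < trm p x 0).
  { unfold trm. simpl INR. rewrite !Rplus_0_r. unfold Rdiv. rewrite !Rmult_1_l.
    apply Rinv_lt_contravar. apply Rmult_lt_0_compat; apply pow_lt; lra.
    apply pow_lt_compat; try lia; lra. }
  lra.
Qed.

Lemma term_taylor (p k : nat) (x h : R) : 0 < x -> Rabs h <= x / 2 -> h <> 0 ->
  Rabs ((trm p (x + h) k - trm p x k) / h + INR p * trm (S p) x k)
   <= Rabs h * (INR p * INR (S p) * 2 ^ (p + 2)) * trm (p + 2) x k.
Proof.
  intros Hx Hh Hh0. unfold trm.
  set (u := x + INR k). pose proof (pos_INR k).
  assert (Hu : 0 < u) by (unfold u; lra).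
  assert (Hhu : Rabs h <= u / 2) by (unfold u; lra).
  replace (x + h + INR k) with (u + h) by (unfold u; ring).
  pose proof (taylor_invpow u h p Hu Hhu) as Ht.
  set (a := 1 + INR k). assert (Ha : 0 < a) by (unfold a; lra).
  replace ((a / (u + h) ^ p - a / u ^ p) / h + INR p * (a / u ^ S p))
    with ((a / h) * (/ (u + h) ^ p - / u ^ p + INR p * h / u ^ S p)).
  2:{ field. repeat split; auto; try nz.
      assert (0 < u + h) by (pose proof (Rabs_le_between' h 0 (u/2)); split_Rabs; lra). nz. }
  rewrite Rabs_mult.
  assert (Rabs (a / h) = a / Rabs h).
  { unfold Rdiv. rewrite Rabs_mult, Rabs_inv, Rabs_right by lra. auto. }
  rewrite H0.
  assert (0 < Rabs h) by (apply Rabs_pos_lt; auto).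
  apply Rle_trans with (a / Rabs h * (h ^ 2 * (INR p * INR (S p) * 2 ^ (p + 2) / u ^ (p + 2)))).
  - apply Rmult_le_compat_l; auto. left; apply Rdiv_lt_0_compat; auto.
  - assert (h ^ 2 = Rabs h * Rabs h) by (rewrite <- Rabs_mult, Rabs_right; [ring | nra]).
    rewrite H2. right. field; nz.
Qed.

Lemma is_derive_T (p : nat) (x : R) : (3 <= p)%nat -> 0 < x ->
  is_derive (T p) x (- INR p * T (S p) x).
Proof.
  intros Hp Hx. apply is_derive_Reals. intros eps Heps.
  set (K := INR p * INR (S p) * 2 ^ (p + 2)).
  assert (HK : 0 <= K).
  { unfold K. repeat apply Rmult_le_pos; try apply pos_INR. apply pow_le; lra. }
  set (M := K * T (p + 2) x).
  assert (HM : 0 <= M).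
  { unfold M. apply Rmult_le_pos; auto. left; apply T_pos; auto; lia. }
  assert (Hd : 0 < Rmin (x / 2) (eps / (M + 1))).
  { apply Rmin_pos. lra. apply Rdiv_lt_0_compat; lra. }
  exists (mkposreal _ Hd). intros h Hh0 Hh. simpl in Hh.
  assert (Hh1 : Rabs h < x / 2) by (eapply Rlt_le_trans; [apply Hh | apply Rmin_l]).
  assert (Hh2 : Rabs h < eps / (M + 1)) by (eapply Rlt_le_trans; [apply Hh | apply Rmin_r]).
  assert (Hxh : 0 < x + h) by (pose proof (Rabs_le_between' h 0 (x/2)); split_Rabs; lra).
  set (a := fun k => (trm p (x + h) k - trm p x k) / h + INR p * trm (S p) x k).
  assert (ex1 : ex_series (fun k => trm p (x + h) k - trm p x k)).
  { apply (ex_series_ext (fun k => plus (trm p (x + h) k) (scal (-1) (trm p x k)))).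
    intros. unfold plus, scal; simpl. unfold mult; simpl. ring.
    apply (@ex_series_plus R_AbsRing R_NormedModule). apply ex_T; auto. apply (@ex_series_scal_l R_AbsRing R_NormedModule). apply ex_T; auto. }
  assert (ex2 : ex_series (fun k => / h * (trm p (x + h) k - trm p x k))).
  { apply (ex_series_ext (fun k => scal (/ h) ((fun k => trm p (x + h) k - trm p x k) k))).
    intros; reflexivity. apply (@ex_series_scal_l R_AbsRing R_NormedModule). auto. }
  assert (ex3 : ex_series (fun k => INR p * trm (S p) x k)).
  { apply (ex_series_ext (fun k => scal (INR p) (trm (S p) x k))).
    intros; reflexivity. apply (@ex_series_scal_l R_AbsRing R_NormedModule). apply ex_T; auto. }
  assert (Ea : (T p (x + h) - T p x) / h - - INR p * T (S p) x = Series a).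
  { unfold a.
    rewrite (Series_ext _ (fun k => / h * (trm p (x + h) k - trm p x k) + INR p * trm (S p) x k))
      by (intros; unfold Rdiv; ring).
    rewrite (Series_plus _ _ ex2 ex3).
    rewrite (Series_scal_l (/ h)), (Series_scal_l (INR p)).
    rewrite Series_minus by (apply ex_T; auto).
    unfold T. unfold Rdiv. ring. }
  rewrite Ea.
  assert (Hb : forall k, Rabs (a k) <= Rabs h * K * trm (p + 2) x k).
  { intros k. apply term_taylor; auto. lra. }
  assert (Hexb : ex_series (fun k => Rabs h * K * trm (p + 2) x k)).
  { apply (ex_series_ext (fun k => scal (Rabs h * K) (trm (p + 2) x k))).
    intros; reflexivity. apply (@ex_series_scal_l R_AbsRing R_NormedModule). apply ex_T; auto; lia. }
  assert (Hexa : ex_series (fun k => Rabs (a k))).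
  { apply (@ex_series_le R_AbsRing R_CompleteNormedModule _ (fun k => Rabs h * K * trm (p + 2) x k)); auto.
    intros k. change (norm (Rabs (a k))) with (Rabs (Rabs (a k))). rewrite Rabs_Rabsolu. apply Hb. }
  apply Rle_lt_trans with (Series (fun k => Rabs (a k))).
  apply Series_Rabs; auto.
  apply Rle_lt_trans with (Series (fun k => Rabs h * K * trm (p + 2) x k)).
  apply Series_le; auto. intros; split; [apply Rabs_pos | auto].
  rewrite Series_scal_l. fold (T (p + 2) x).
  replace (Rabs h * K * T (p + 2) x) with (Rabs h * M) by (unfold M; ring).
  apply Rle_lt_trans with (eps / (M + 1) * M).
  apply Rmult_le_compat_r; auto; lra.
  apply (Rmult_lt_reg_r (M + 1)). lra.
  field_simplify; lra.
Qed.

Lemma is_derive_Rpower_comp (g : R -> R) (dg c x : R) :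
  0 < g x -> is_derive g x dg ->
  is_derive (fun y => Rpower (g y) c) x (c * Rpower (g x) (c - 1) * dg).
Proof.
  intros Hg Hd.
  assert (H := is_derive_comp (fun y => Rpower y c) g x (c * Rpower (g x) (c - 1)) dg).
  replace (c * Rpower (g x) (c - 1) * dg) with (scal dg (c * Rpower (g x) (c - 1))).
  apply H; auto. apply is_derive_Reals. apply derivable_pt_lim_power; auto.
  unfold scal; simpl; unfold mult; simpl. ring.
Qed.

Lemma is_derive_val (f : R -> R) (x l l' : R) : is_derive f x l -> l = l' -> is_derive f x l'.
Proof. intros H E; subst; auto. Qed.

Section Phi.
Variable m : nat.
Hypothesis Hm : (3 <= m)%nat.

Definition Phi (b x : R) := Rpower (T m x) (- b).
Definition dPhi (b x : R) := b * INR m * Rpower (T m x) (- b - 1) * T (S m) x.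
Definition d2Phi (b x : R) := b * INR m * Rpower (T m x) (- b - 2) *
  ((b + 1) * INR m * T (S m) x ^ 2 - INR (S m) * T m x * T (S (S m)) x).

Lemma Phi_derive (b x : R) : 0 < x -> is_derive (Phi b) x (dPhi b x).
Proof.
  intros Hx. unfold Phi, dPhi.
  replace (b * INR m * Rpower (T m x) (- b - 1) * T (S m) x) with
    (- b * Rpower (T m x) (- b - 1) * (- INR m * T (S m) x)) by ring.
  apply is_derive_Rpower_comp. apply T_pos; auto.
  apply is_derive_T; auto.
Qed.

Lemma dPhi_derive (b x : R) : 0 < x -> is_derive (dPhi b) x (d2Phi b x).
Proof.
  intros Hx. unfold dPhi, d2Phi.
  assert (HT : 0 < T m x) by (apply T_pos; auto).
  assert (H1 := is_derive_Rpower_comp (T m) (- INR m * T (S m) x) (- b - 1) x HT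
                  (is_derive_T m x Hm Hx)).
  assert (H2 := is_derive_T (S m) x ltac:(lia) Hx).
  assert (H3 := is_derive_mult (fun y => Rpower (T m y) (- b - 1)) (T (S m)) x _ _ H1 H2
                  (fun a b => Rmult_comm a b)).
  assert (H4 := is_derive_scal (fun y => Rpower (T m y) (- b - 1) * T (S m) y) x (b * INR m) _ H3).
  eapply is_derive_ext. 2: eapply is_derive_val. 2: apply H4.
  { intros t. unfold scal; simpl; unfold mult; simpl. ring. }
  unfold scal, plus, mult; simpl. unfold mult, plus; simpl.
  assert (E : Rpower (T m x) (- b - 1) = Rpower (T m x) (- b - 2) * T m x).
  { replace (- b - 1) with (- b - 2 + 1) by ring. rewrite Rpower_plus, Rpower_1; auto. }
  replace (- b - 1 - 1) with (- b - 2) by ring.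
  change (match m with 0%nat => 1 | S _ => INR m + 1 end) with (INR (S m)).
  rewrite E. rewrite !S_INR. ring.
Qed.

(* Cauchy-Schwarz *)
Lemma T_CS (x : R) : 0 < x -> T (S m) x ^ 2 <= T m x * T (S (S m)) x.
Proof.
  intros Hx.
  assert (H2 : 0 < T (S (S m)) x) by (apply T_pos; auto; lia).
  set (s := T (S m) x / T (S (S m)) x).
  assert (Hnn : 0 <= Series (fun k => trm m x k - 2 * s * trm (S m) x k + s ^ 2 * trm (S (S m)) x k)).
  { apply Series_nonneg.
    - intros k. unfold trm. pose proof (pos_INR k).
      assert (0 < x + INR k) by lra.
      replace ((1 + INR k) / (x + INR k) ^ m - 2 * s * ((1 + INR k) / (x + INR k) ^ S m) +
        s ^ 2 * ((1 + INR k) / (x + INR k) ^ S (S m))) with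
        ((1 + INR k) / (x + INR k) ^ S (S m) * (x + INR k - s) ^ 2).
      2:{ simpl. field. nz. }
      apply Rmult_le_pos. left; apply Rdiv_lt_0_compat. lra. apply pow_lt; lra.
      apply pow2_ge_0.
    - apply (ex_series_ext (fun k => plus (plus (trm m x k) (scal (- 2 * s) (trm (S m) x k)))
                                       (scal (s ^ 2) (trm (S (S m)) x k)))).
      intros. unfold plus, scal; simpl. unfold mult, plus; simpl. ring.
      apply (@ex_series_plus R_AbsRing R_NormedModule).
      apply (@ex_series_plus R_AbsRing R_NormedModule). apply ex_T; auto.
      apply (@ex_series_scal_l R_AbsRing R_NormedModule). apply ex_T; auto.
      apply (@ex_series_scal_l R_AbsRing R_NormedModule). apply ex_T; auto. }
  rewrite Series_plus, Series_minus, !Series_scal_l in Hnn.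
  - fold (T m x) (T (S m) x) (T (S (S m)) x) in Hnn.
    unfold s in Hnn.
    assert (E : T m x - 2 * (T (S m) x / T (S (S m)) x) * T (S m) x +
      (T (S m) x / T (S (S m)) x) ^ 2 * T (S (S m)) x =
      (T m x * T (S (S m)) x - T (S m) x ^ 2) / T (S (S m)) x) by (field; lra).
    rewrite E in Hnn.
    assert (0 <= T m x * T (S (S m)) x - T (S m) x ^ 2).
    { apply (Rmult_le_reg_r (/ T (S (S m)) x)). apply Rinv_0_lt_compat; auto.
      rewrite Rmult_0_l. exact Hnn. }
    lra.
  - apply ex_T; auto.
  - apply (ex_series_ext (fun k => scal (2 * s) (trm (S m) x k))). intros; reflexivity.
    apply (@ex_series_scal_l R_AbsRing R_NormedModule). apply ex_T; auto.
  - apply (ex_series_ext (fun k => plus (trm m x k) (scal (- 2 * s) (trm (S m) x k)))).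
    intros. unfold plus, scal; simpl. unfold mult, plus; simpl. ring.
    apply (@ex_series_plus R_AbsRing R_NormedModule). apply ex_T; auto.
    apply (@ex_series_scal_l R_AbsRing R_NormedModule). apply ex_T; auto.
  - apply (ex_series_ext (fun k => scal (s ^ 2) (trm (S (S m)) x k))). intros; reflexivity.
    apply (@ex_series_scal_l R_AbsRing R_NormedModule). apply ex_T; auto.
Qed.

End Phi.

Lemma Rpower_pos (a c : R) : 0 < Rpower a c.
Proof. unfold Rpower. apply exp_pos. Qed.

Lemma Rpower_lt_pos (a b c : R) : 0 < c -> 0 < a -> a < b -> Rpower a c < Rpower b c.
Proof. intros; apply Rlt_Rpower_l; auto. Qed.

Lemma Rpower_le_pos (a b c : R) : 0 <= c -> 0 < a -> a <= b -> Rpower a c <= Rpower b c.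
Proof. intros; apply Rle_Rpower_l; auto. Qed.

Lemma Rpower_lt_neg (a b c : R) : c < 0 -> 0 < a -> a < b -> Rpower b c < Rpower a c.
Proof.
  intros Hc Ha Hab. unfold Rpower. apply exp_increasing.
  assert (ln a < ln b) by (apply ln_increasing; auto). nra.
Qed.

Lemma Rpower_le_neg (a b c : R) : c <= 0 -> 0 < a -> a <= b -> Rpower b c <= Rpower a c.
Proof.
  intros Hc Ha Hab. destruct (Req_dec a b). subst; lra.
  destruct (Req_dec c 0). subst. rewrite !Rpower_O; lra.
  left; apply Rpower_lt_neg; lra.
Qed.

Lemma Rpower_derive (q y : R) : 0 < y -> is_derive (fun z => Rpower z q) y (q * Rpower y (q - 1)).
Proof. intros; apply is_derive_Reals, derivable_pt_lim_power; auto. Qed.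

Lemma pow_sconvex (q : R) : 0 < q * (q - 1) ->
  forall x y t, 0 < x -> 0 < y -> x <> y -> 0 < t < 1 ->
    Rpower (t * x + (1 - t) * y) q < t * Rpower x q + (1 - t) * Rpower y q.
Proof.
  intros Hq. apply (sconvex_of_deriv (fun z => Rpower z q) (fun z => q * Rpower z (q - 1))).
  - intros; apply Rpower_derive; auto.
  - apply (sincr_of_deriv _ (fun z => q * ((q - 1) * Rpower z (q - 1 - 1)))).
    + intros z Hz. apply (is_derive_scal (fun z => Rpower z (q - 1))). apply Rpower_derive; auto.
    + intros z Hz. pose proof (Rpower_pos z (q - 1 - 1)). nra.
Qed.

Lemma pow_sconcave (q : R) : 0 < q < 1 ->
  forall x y t, 0 < x -> 0 < y -> x <> y -> 0 < t < 1 ->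
    t * Rpower x q + (1 - t) * Rpower y q < Rpower (t * x + (1 - t) * y) q.
Proof.
  intros Hq x y t Hx Hy Hxy Ht.
  cut (- Rpower (t * x + (1 - t) * y) q < t * (- Rpower x q) + (1 - t) * (- Rpower y q)).
  { intros; lra. }
  apply (sconvex_of_deriv (fun z => - Rpower z q) (fun z => - (q * Rpower z (q - 1)))); auto.
  - intros z Hz. apply (is_derive_opp (fun z => Rpower z q)). apply Rpower_derive; auto.
  - apply (sincr_of_deriv _ (fun z => - (q * ((q - 1) * Rpower z (q - 1 - 1))))).
    + intros z Hz. apply (is_derive_opp (fun z => q * Rpower z (q - 1))).
      apply (is_derive_scal (fun z => Rpower z (q - 1))). apply Rpower_derive; auto.
    + intros z Hz. destruct Hq as [Hq1 Hq2]. assert (0 < q * (1 - q)) by nra. pose proof (Rpower_pos z (q - 1 - 1)). nra.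
Qed.

Section Comp.
Variable P : R -> R.
Hypothesis Ppos : forall x, 0 < x -> 0 < P x.
Hypothesis Pinc : forall x y, 0 < x -> x < y -> P x < P y.

Lemma P_inj x y : 0 < x -> 0 < y -> x <> y -> P x <> P y.
Proof.
  intros Hx Hy Hxy. destruct (Rlt_dec x y). apply Pinc in r; auto; lra.
  assert (y < x) by lra. apply Pinc in H; auto; lra.
Qed.

Lemma comp_convex_gt1 (q : R) : 1 < q ->
  (forall x y t, 0 < x -> 0 < y -> 0 < t < 1 -> P (t * x + (1 - t) * y) <= t * P x + (1 - t) * P y) ->
  forall x y t, 0 < x -> 0 < y -> x <> y -> 0 < t < 1 ->
    Rpower (P (t * x + (1 - t) * y)) q < t * Rpower (P x) q + (1 - t) * Rpower (P y) q.
Proof.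
  intros Hq Hc x y t Hx Hy Hxy Ht.
  assert (Hmid : 0 < t * x + (1 - t) * y) by nra.
  pose proof (Ppos x Hx). pose proof (Ppos y Hy). pose proof (Ppos _ Hmid).
  apply Rle_lt_trans with (Rpower (t * P x + (1 - t) * P y) q).
  - apply Rpower_le_pos; auto; lra.
  - apply pow_sconvex; auto. nra. apply P_inj; auto.
Qed.

Lemma comp_concave_neg (q : R) : q < 0 ->
  (forall x y t, 0 < x -> 0 < y -> 0 < t < 1 -> t * P x + (1 - t) * P y <= P (t * x + (1 - t) * y)) ->
  forall x y t, 0 < x -> 0 < y -> x <> y -> 0 < t < 1 ->
    Rpower (P (t * x + (1 - t) * y)) q < t * Rpower (P x) q + (1 - t) * Rpower (P y) q.
Proof.
  intros Hq Hc x y t Hx Hy Hxy Ht.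
  assert (Hmid : 0 < t * x + (1 - t) * y) by nra.
  pose proof (Ppos x Hx). pose proof (Ppos y Hy). pose proof (Ppos _ Hmid).
  apply Rle_lt_trans with (Rpower (t * P x + (1 - t) * P y) q).
  - apply Rpower_le_neg; auto; try lra. nra.
  - apply pow_sconvex; auto. nra. apply P_inj; auto.
Qed.

Lemma comp_concave_01 (q : R) : 0 < q < 1 ->
  (forall x y t, 0 < x -> 0 < y -> 0 < t < 1 -> t * P x + (1 - t) * P y <= P (t * x + (1 - t) * y)) ->
  forall x y t, 0 < x -> 0 < y -> x <> y -> 0 < t < 1 ->
    t * Rpower (P x) q + (1 - t) * Rpower (P y) q < Rpower (P (t * x + (1 - t) * y)) q.
Proof.
  intros Hq Hc x y t Hx Hy Hxy Ht.
  assert (Hmid : 0 < t * x + (1 - t) * y) by nra.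
  pose proof (Ppos x Hx). pose proof (Ppos y Hy). pose proof (Ppos _ Hmid).
  apply Rlt_le_trans with (Rpower (t * P x + (1 - t) * P y) q).
  - apply pow_sconcave; auto. apply P_inj; auto.
  - apply Rpower_le_pos; auto; try lra. nra.
Qed.
End Comp.

Lemma is_RInt_val (f : R -> R) (a b l l' : R) : is_RInt f a b l -> l = l' -> is_RInt f a b l'.
Proof. intros H E; subst; auto. Qed.

Lemma is_RInt_plusR (f g : R -> R) (a b If Ig : R) :
  is_RInt f a b If -> is_RInt g a b Ig -> is_RInt (fun t => f t + g t) a b (If + Ig).
Proof. intros H1 H2. exact (is_RInt_plus f g a b If Ig H1 H2). Qed.

Lemma is_RInt_scalR (f : R -> R) (a b c If : R) :
  is_RInt f a b If -> is_RInt (fun t => c * f t) a b (c * If).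
Proof. intros H1. exact (is_RInt_scal f a b c If H1). Qed.

Lemma is_RInt_derivR (f df : R -> R) (a b : R) : a <= b ->
  (forall x, a <= x <= b -> is_derive f x (df x)) ->
  (forall x, a <= x <= b -> continuous df x) ->
  is_RInt df a b (f b - f a).
Proof.
  intros Hab H1 H2. apply (is_RInt_derive f df a b).
  intros y Hy. rewrite Rmin_left, Rmax_right in Hy by lra. auto.
  intros y Hy. rewrite Rmin_left, Rmax_right in Hy by lra. auto.
Qed.

Lemma exp_neg_lt1 (t : R) : 0 < t -> exp (- t) < 1.
Proof. intros. rewrite <- exp_0. apply exp_increasing. lra. Qed.

Definition phi (t : R) := / (1 - exp (- t)) ^ 2.
Definition nu (t : R) := 2 / t - 2 / (exp t - 1).
Definition Kf (x : R) (j : nat) (t : R) := t ^ j * exp (- (x * t)) * phi t.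
Definition Dfun (x tau : R) (m : nat) (t : R) := (t - tau) * t ^ m * exp (- (x * t)) * phi t.
Definition Efun (x tau : R) (m : nat) (t : R) :=
  (t - tau) * (nu t - nu tau) * t ^ m * exp (- (x * t)) * phi t.
Definition Pfun (x tau : R) (m : nat) (t : R) :=
  (x - nu tau) * Kf x (S m) t + (nu tau * tau - tau * x - (INR m - 1)) * Kf x m t
  + tau * (INR m - 2) * Kf x (pred m) t.

Lemma exp_t_inv (t : R) : exp t = / exp (- t).
Proof. rewrite exp_Ropp, Rinv_inv. auto. Qed.

Lemma nu_eq (t : R) : 0 < t -> nu t = 2 / t - 2 * exp (- t) / (1 - exp (- t)).
Proof.
  intros Ht. unfold nu. rewrite exp_t_inv.
  pose proof (exp_pos (- t)). pose proof (exp_neg_lt1 t Ht).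
  field. repeat split; try lra.
Qed.

Lemma D_deriv (x tau : R) (m : nat) (t : R) : (1 <= m)%nat -> 0 < t ->
  is_derive (Dfun x tau m) t (Efun x tau m t - Pfun x tau m t).
Proof.
  intros Hm Ht. destruct m as [|m1]. lia.
  pose proof (exp_pos (- t)). pose proof (exp_neg_lt1 t Ht).
  unfold Dfun, phi. auto_derive.
  - nz.
  - unfold Efun, Pfun, Kf, phi. rewrite (nu_eq t Ht).
    replace (pred (S m1)) with m1 by reflexivity.
    change (match m1 with 0%nat => 1 | S _ => INR m1 + 1 end) with (INR (S m1)).
    rewrite !S_INR. cbn [pow].
    field. repeat split; try lra.
Qed.

Lemma sinh_ge (s : R) : 0 <= s -> 2 * s <= exp s - exp (- s).
Proof.
  intros Hs.
  destruct (mvt_closed (fun y => exp y - exp (- y) - 2 * y) (fun y => exp y + exp (- y) - 2) 0 s Hs)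
    as [c [Hc E]].
  { intros y Hy. auto_derive; auto. ring. }
  assert (0 <= exp c + exp (- c) - 2).
  { assert (exp c * exp (- c) = 1) by (rewrite <- exp_plus; replace (c + - c) with 0 by ring; apply exp_0).
    pose proof (exp_pos c). pose proof (exp_pos (- c)).
    assert (0 <= (exp c - exp (- c)) ^ 2) by apply pow2_ge_0.
    assert ((exp c + exp (- c)) ^ 2 >= 4) by nra.
    nra. }
  rewrite Ropp_0, exp_0 in E. nra.
Qed.

Lemma nu_deriv_nonpos (t : R) : 0 < t -> - 2 / t ^ 2 + 2 * exp t / (exp t - 1) ^ 2 <= 0.
Proof.
  intros Ht.
  set (a := exp (t / 2)).
  assert (Ea : exp t = a * a) by (unfold a; rewrite <- exp_plus; f_equal; field).
  assert (Ha : 1 < a) by (unfold a; rewrite <- exp_0; apply exp_increasing; lra).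
  assert (Hs : 2 * (t / 2) <= a - exp (- (t / 2))) by (apply sinh_ge; lra).
  assert (Einv : exp (- (t / 2)) = / a) by (unfold a; rewrite exp_Ropp; auto).
  rewrite Einv in Hs. replace (2 * (t / 2)) with t in Hs by field.
  assert (H1 : t * a <= a * a - 1).
  { assert (a * (a - / a) = a * a - 1) by (field; lra). nra. }
  rewrite Ea.
  assert (0 < a * a - 1) by nra.
  assert (t * t * (a * a) <= (a * a - 1) * (a * a - 1)).
  { replace (t * t * (a * a)) with ((t * a) * (t * a)) by ring.
    apply Rmult_le_compat; nra. }
  apply (Rmult_le_reg_r (t ^ 2 * (a * a - 1) ^ 2)).
  { apply Rmult_lt_0_compat; apply pow_lt; lra. }
  rewrite Rmult_0_l. field_simplify; try nz; nra.
Qed.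

Lemma nu_decr (a b : R) : 0 < a -> a <= b -> nu b <= nu a.
Proof.
  intros Ha Hab.
  cut (- nu a <= - nu b). lra.
  apply (incr_of_deriv (fun t => - nu t) (fun t => - (- 2 / t ^ 2 + 2 * exp t / (exp t - 1) ^ 2))); auto.
  - intros t Ht. unfold nu.
    assert (exp t - 1 <> 0) by (assert (1 < exp t) by (rewrite <- exp_0; apply exp_increasing; lra); lra).
    auto_derive. repeat split; nz. field. nz.
  - intros t Ht. pose proof (nu_deriv_nonpos t Ht). lra.
Qed.

Lemma phi_pos (t : R) : 0 < t -> 0 < phi t.
Proof.
  intros Ht. unfold phi. pose proof (exp_neg_lt1 t Ht).
  apply Rinv_0_lt_compat, pow_lt; lra.
Qed.

Lemma Efun_nonpos (x tau : R) (m : nat) (t : R) : 0 < tau -> 0 < t -> Efun x tau m t <= 0.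
Proof.
  intros Htau Ht. unfold Efun.
  assert (Hs : (t - tau) * (nu t - nu tau) <= 0).
  { destruct (Rle_dec t tau).
    - assert (nu tau <= nu t) by (apply nu_decr; lra). nra.
    - assert (nu t <= nu tau) by (apply nu_decr; lra). nra. }
  assert (0 <= t ^ m * exp (- (x * t)) * phi t).
  { apply Rmult_le_pos. apply Rmult_le_pos. apply pow_le; lra. left; apply exp_pos.
    left; apply phi_pos; auto. }
  replace ((t - tau) * (nu t - nu tau) * t ^ m * exp (- (x * t)) * phi t)
    with ((t - tau) * (nu t - nu tau) * (t ^ m * exp (- (x * t)) * phi t)) by ring.
  nra.
Qed.

Lemma Kf_cont (x : R) (j : nat) (t : R) : 0 < t -> continuous (Kf x j) t.
Proof.
  intros Ht. apply (@ex_derive_continuous R_AbsRing R_NormedModule). unfold Kf, phi.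
  pose proof (exp_neg_lt1 t Ht). auto_derive. nz.
Qed.

Lemma EP_cont (x tau : R) (m : nat) (t : R) : 0 < t -> 0 < tau ->
  continuous (fun t => Efun x tau m t - Pfun x tau m t) t.
Proof.
  intros Ht Htau. apply (@ex_derive_continuous R_AbsRing R_NormedModule). unfold Efun, Pfun, Kf, phi, nu.
  pose proof (exp_neg_lt1 t Ht).
  assert (exp t - 1 <> 0) by (assert (1 < exp t) by (rewrite <- exp_0; apply exp_increasing; lra); lra).
  auto_derive. repeat split; nz.
Qed.

Lemma finite_ineq (x tau : R) (m : nat) (e L : R) :
  (1 <= m)%nat -> 0 < tau -> 0 < e -> e <= L ->
  Dfun x tau m L - Dfun x tau m e
  + (x - nu tau) * RInt (Kf x (S m)) e L
  + (nu tau * tau - tau * x - (INR m - 1)) * RInt (Kf x m) e L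
  + tau * (INR m - 2) * RInt (Kf x (pred m)) e L <= 0.
Proof.
  intros Hm Htau He HeL.
  assert (iK : forall j, is_RInt (Kf x j) e L (RInt (Kf x j) e L)).
  { intros j. apply (@RInt_correct R_CompleteNormedModule). apply (@ex_RInt_continuous R_CompleteNormedModule).
    intros z Hz. rewrite Rmin_left, Rmax_right in Hz by lra. apply Kf_cont; lra. }
  assert (iD : is_RInt (fun t => Efun x tau m t - Pfun x tau m t) e L (Dfun x tau m L - Dfun x tau m e)).
  { apply is_RInt_derivR; auto.
    intros; apply D_deriv; auto; lra.
    intros; apply EP_cont; auto; lra. }
  assert (iP : is_RInt (Pfun x tau m) e L
     ((x - nu tau) * RInt (Kf x (S m)) e L
      + (nu tau * tau - tau * x - (INR m - 1)) * RInt (Kf x m) e L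
      + tau * (INR m - 2) * RInt (Kf x (pred m)) e L)).
  { unfold Pfun. apply is_RInt_plusR. apply is_RInt_plusR.
    apply is_RInt_scalR; auto. apply is_RInt_scalR; auto. apply is_RInt_scalR; auto. }
  assert (iE := is_RInt_plusR _ _ _ _ _ _ iD iP).
  assert (i0 : is_RInt (fun _ => 0) e L 0).
  { pose proof (@is_RInt_const R_NormedModule e L 0) as H.
    eapply is_RInt_val. exact H. unfold scal; simpl; unfold mult; simpl; ring. }
  assert (Hle := is_RInt_le _ _ e L _ _ HeL iE i0).
  match type of Hle with ?a -> _ => assert (Hle' : a) end.
  { intros t Ht. pose proof (Efun_nonpos x tau m t Htau ltac:(lra)). lra. }
  specialize (Hle Hle'). lra.
Qed.

Lemma last_le_sum (f : nat -> R) (n : nat) : (forall k, 0 <= f k) -> f n <= sum_f_R0 f n.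
Proof.
  intros H. destruct n. simpl; lra.
  simpl. pose proof (cond_pos_sum f n H). lra.
Qed.

Lemma exp_ge_pow (y : R) (a : nat) : 0 <= y -> y ^ a / INR (Factorial.fact a) <= exp y.
Proof.
  intros Hy. eapply Rle_trans. 2: apply (exp_ge_taylor y a Hy).
  apply (last_le_sum (fun k => y ^ k / INR (Factorial.fact k))).
  intros k. apply Rmult_le_pos. apply pow_le; auto.
  left; apply Rinv_0_lt_compat, INR_fact_lt_0.
Qed.

Lemma polyexp_bound (u t : R) (a : nat) : 0 < u -> 0 <= t ->
  (1 + t) ^ a * exp (- (u * t)) <= exp u * INR (Factorial.fact (S a)) / u ^ (S a) / (1 + t).
Proof.
  intros Hu Ht.
  pose proof (exp_ge_pow (u * (1 + t)) (S a) ltac:(nra)) as H.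
  assert (Hf : 0 < INR (Factorial.fact (S a))) by apply INR_fact_lt_0.
  assert (E : exp (- (u * t)) = exp u / exp (u * (1 + t))).
  { unfold Rdiv. rewrite <- exp_Ropp, <- exp_plus. f_equal. ring. }
  rewrite E.
  assert (He : 0 < exp (u * (1 + t))) by apply exp_pos.
  assert (Hpu : 0 < u ^ S a) by (apply pow_lt; auto).
  assert (Hpt : 0 < (1 + t) ^ a) by (apply pow_lt; lra).
  rewrite Rpow_mult_distr in H.
  apply (Rmult_le_reg_r (exp (u * (1 + t)) * u ^ S a * (1 + t) / INR (Factorial.fact (S a)))).
  { apply Rdiv_lt_0_compat; [|exact Hf]. apply Rmult_lt_0_compat. apply Rmult_lt_0_compat; auto. lra. }
  replace ((1 + t) ^ a * (exp u / exp (u * (1 + t))) *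
    (exp (u * (1 + t)) * u ^ S a * (1 + t) / INR (Factorial.fact (S a))))
    with (exp u * (u ^ S a * (1 + t) ^ S a / INR (Factorial.fact (S a)))).
  2:{ change ((1 + t) ^ S a) with ((1 + t) * (1 + t) ^ a). field. lra. }
  replace (exp u * INR (Factorial.fact (S a)) / u ^ S a / (1 + t) *
    (exp (u * (1 + t)) * u ^ S a * (1 + t) / INR (Factorial.fact (S a))))
    with (exp u * exp (u * (1 + t))) by (field; lra).
  apply Rmult_le_compat_l. left; apply exp_pos. lra.
Qed.

Lemma lim_C_div (C c : R) : 0 < c -> is_lim_seq (fun n => C / (INR n + c)) 0.
Proof.
  intros Hc.
  assert (H : is_lim_seq (fun n => C * / (INR n + c)) (Rbar_mult C (Rbar_inv p_infty))).
  { apply is_lim_seq_scal_l. apply is_lim_seq_inv.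
    eapply is_lim_seq_le_p_loc with INR.
    exists 0%nat. intros; lra. apply is_lim_seq_INR. discriminate. }
  simpl in H. rewrite Rmult_0_r in H. exact H.
Qed.

Lemma squeeze0 (s : nat -> R) (C c : R) : 0 < c ->
  (forall n, Rabs (s n) <= C / (INR n + c)) -> is_lim_seq s 0.
Proof.
  intros Hc H. apply is_lim_seq_abs_0.
  apply is_lim_seq_le_le with (fun _ => 0) (fun n => C / (INR n + c)).
  intros n; split; [apply Rabs_pos | auto].
  apply is_lim_seq_const. apply lim_C_div; auto.
Qed.

Lemma tail0 (b : nat -> R) : ex_series b -> is_lim_seq (fun N => Series (fun k => b (N + k)%nat)) 0.
Proof.
  intros Hb. apply is_lim_seq_incr_1.
  apply is_lim_seq_ext with (fun n => Series b - sum_f_R0 b n).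
  { intros n. rewrite (Series_incr_n b (S n)) by (auto; lia). simpl pred. ring. }
  replace (Finite 0) with (Finite (Series b - Series b)) by (f_equal; ring).
  apply is_lim_seq_minus'. apply is_lim_seq_const.
  pose proof (Series_correct b Hb) as H.
  apply is_lim_seq_ext with (sum_n b). intros; apply sum_n_Reals. exact H.
Qed.

Lemma lim_finite_sum (a : nat -> nat -> R) (l : nat -> R) (N : nat) :
  (forall k, is_lim_seq (fun n => a n k) (l k)) ->
  is_lim_seq (fun n => sum_f_R0 (a n) N) (sum_f_R0 l N).
Proof.
  intros H. induction N.
  - simpl. apply H.
  - simpl. apply is_lim_seq_plus'; auto.
Qed.

Lemma lim_le_bound (u : nat -> R) (l B : R) : is_lim_seq u l -> (forall n, Rabs (u n) <= B) -> Rabs l <= B.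
Proof.
  intros Hu HB.
  assert (H1 := is_lim_seq_abs u l Hu).
  assert (H2 := is_lim_seq_le (fun n => Rabs (u n)) (fun _ => B) (Rabs l) B HB H1 (is_lim_seq_const B)).
  simpl in H2. auto.
Qed.

Lemma series_dom (a : nat -> nat -> R) (l b : nat -> R) :
  (forall n k, Rabs (a n k) <= b k) -> ex_series b ->
  (forall k, is_lim_seq (fun n => a n k) (l k)) ->
  is_lim_seq (fun n => Series (a n)) (Series l).
Proof.
  intros Hab Hb Hl.
  assert (Hlb : forall k, Rabs (l k) <= b k).
  { intros k. apply (lim_le_bound (fun n => a n k)); auto. }
  assert (exa : forall n, ex_series (a n)).
  { intros n. apply (@ex_series_le R_AbsRing R_CompleteNormedModule _ b); auto. }
  assert (exl : ex_series l).
  { apply (@ex_series_le R_AbsRing R_CompleteNormedModule _ b); auto. }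
  apply is_lim_seq_spec. intros eps.
  assert (Ht := tail0 b Hb). apply is_lim_seq_spec in Ht.
  destruct (Ht (mkposreal (eps / 3) ltac:(destruct eps; simpl; lra))) as [N0 HN0].
  set (N := S N0).
  assert (HtN : Series (fun k => b (N + k)%nat) < eps / 3).
  { specialize (HN0 N ltac:(unfold N; lia)). unfold N in *. simpl in *.
    rewrite Rminus_0_r in HN0. apply Rabs_def2 in HN0. lra. }
  assert (Hf := lim_finite_sum a l N0 Hl). apply is_lim_seq_spec in Hf.
  destruct (Hf (mkposreal (eps / 3) ltac:(destruct eps; simpl; lra))) as [N1 HN1].
  exists N1. intros n Hn. specialize (HN1 n Hn). simpl in HN1.
  rewrite (Series_incr_n (a n) N) by (unfold N; auto; lia).
  rewrite (Series_incr_n l N) by (unfold N; auto; lia).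
  unfold N at 1 3. simpl pred.
  assert (T1 : Rabs (Series (fun k => a n (N + k)%nat)) <= Series (fun k => b (N + k)%nat)).
  { eapply Rle_trans. apply Series_Rabs.
    apply (@ex_series_le R_AbsRing R_CompleteNormedModule _ (fun k => b (N + k)%nat)).
    intros k. change (norm (Rabs (a n (N + k)%nat))) with (Rabs (Rabs (a n (N + k)%nat))).
    rewrite Rabs_Rabsolu. auto.
    apply (ex_series_incr_n b N); auto.
    apply Series_le. intros; split; [apply Rabs_pos | auto].
    apply (ex_series_incr_n b N); auto. }
  assert (T2 : Rabs (Series (fun k => l (N + k)%nat)) <= Series (fun k => b (N + k)%nat)).
  { eapply Rle_trans. apply Series_Rabs.
    apply (@ex_series_le R_AbsRing R_CompleteNormedModule _ (fun k => b (N + k)%nat)).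
    intros k. change (norm (Rabs (l (N + k)%nat))) with (Rabs (Rabs (l (N + k)%nat))).
    rewrite Rabs_Rabsolu. auto.
    apply (ex_series_incr_n b N); auto.
    apply Series_le. intros; split; [apply Rabs_pos | auto].
    apply (ex_series_incr_n b N); auto. }
  set (A1 := sum_f_R0 (a n) N0) in *. set (A2 := sum_f_R0 l N0) in *.
  set (B1 := Series (fun k => a n (N + k)%nat)) in *.
  set (B2 := Series (fun k => l (N + k)%nat)) in *.
  replace (A1 + B1 - (A2 + B2)) with ((A1 - A2) + (B1 - B2)) by ring.
  eapply Rle_lt_trans. apply Rabs_triang.
  eapply Rle_lt_trans. apply Rplus_le_compat_l. apply Rabs_triang.
  rewrite Rabs_Ropp. lra.
Qed.

Fixpoint A (j : nat) (u t : R) : R :=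
  match j with
  | O => exp (- (u * t)) / u
  | S j' => INR (S j') / u * A j' u t + t ^ (S j') * exp (- (u * t)) / u
  end.

Fixpoint cA (j : nat) (u : R) : R :=
  match j with
  | O => / u
  | S j' => INR (S j') / u * cA j' u + / u
  end.

Lemma A_deriv (j : nat) (u t : R) : 0 < u ->
  is_derive (A j u) t (- (t ^ j * exp (- (u * t)))).
Proof.
  intros Hu. induction j.
  - simpl A. auto_derive. lra. simpl. field. lra.
  - apply (is_derive_ext (fun t => INR (S j) / u * A j u t + t ^ (S j) * exp (- (u * t)) / u)).
    intros; reflexivity.
    eapply is_derive_val.
    apply (is_derive_plus (fun t => INR (S j) / u * A j u t) (fun t => t ^ (S j) * exp (- (u * t)) / u)).
    apply (is_derive_scal (A j u)). apply IHj.
    auto_derive. lra. reflexivity.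
    unfold plus, scal; simpl. unfold mult, plus; simpl.
    change (match j with 0%nat => 1 | S _ => INR j + 1 end) with (INR (S j)).
    field. lra.
Qed.

Lemma A_cont (j : nat) (u t : R) : 0 < u -> continuity_pt (A j u) t.
Proof.
  intros Hu. apply continuity_pt_filterlim.
  apply (@ex_derive_continuous R_AbsRing R_NormedModule).
  eexists. apply A_deriv; auto.
Qed.

Lemma A_at0 (j : nat) (u : R) : 0 < u -> A j u 0 = INR (Factorial.fact j) / u ^ (S j).
Proof.
  intros Hu. induction j.
  - simpl. rewrite Rmult_0_r, Ropp_0, exp_0. field. lra.
  - change (A (S j) u 0) with (INR (S j) / u * A j u 0 + 0 ^ (S j) * exp (- (u * 0)) / u).
    rewrite IHj. change (Factorial.fact (S j)) with (S j * Factorial.fact j)%nat.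
    rewrite mult_INR. change (0 ^ S j) with (0 * 0 ^ j).
    change (u ^ S (S j)) with (u * u ^ S j).
    field; nz.
Qed.

Lemma A_nonneg (j : nat) (u t : R) : 0 < u -> 0 <= t -> 0 <= A j u t.
Proof.
  intros Hu Ht. induction j.
  - simpl. unfold Rdiv. apply Rmult_le_pos. left; apply exp_pos. left; apply Rinv_0_lt_compat; auto.
  - change (A (S j) u t) with (INR (S j) / u * A j u t + t ^ (S j) * exp (- (u * t)) / u).
    apply Rplus_le_le_0_compat.
    apply Rmult_le_pos; auto. apply Rdiv_le_0_compat. apply pos_INR. auto.
    apply Rdiv_le_0_compat; auto. apply Rmult_le_pos. apply pow_le; auto. left; apply exp_pos.
Qed.

Lemma A_decr (j : nat) (u a b : R) : 0 < u -> 0 <= a -> a <= b -> A j u b <= A j u a.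
Proof.
  intros Hu Ha Hab.
  destruct (mvt_closed (A j u) (fun t => - (t ^ j * exp (- (u * t)))) a b Hab) as [c [Hc E]].
  { intros; apply A_deriv; auto. }
  assert (0 <= c ^ j * exp (- (u * c))).
  { apply Rmult_le_pos. apply pow_le; lra. left; apply exp_pos. }
  nra.
Qed.

Lemma cA_nonneg (j : nat) (u : R) : 0 < u -> 0 <= cA j u.
Proof.
  intros Hu. induction j; cbn [cA].
  - left; apply Rinv_0_lt_compat; auto.
  - apply Rplus_le_le_0_compat. apply Rmult_le_pos; auto.
    apply Rdiv_le_0_compat; auto. apply pos_INR.
    left; apply Rinv_0_lt_compat; auto.
Qed.

Lemma A_bound (j : nat) (u t : R) : 0 < u -> 0 <= t ->
  A j u t <= cA j u * (1 + t) ^ j * exp (- (u * t)).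
Proof.
  intros Hu Ht. pose proof (exp_pos (- (u * t))) as He. induction j.
  - simpl. unfold Rdiv. rewrite Rmult_1_r. lra.
  - change (A (S j) u t) with (INR (S j) / u * A j u t + t ^ (S j) * exp (- (u * t)) / u).
    change (cA (S j) u) with (INR (S j) / u * cA j u + / u).
    change ((1 + t) ^ S j) with ((1 + t) * (1 + t) ^ j).
    assert (H1 : (1 + t) ^ j <= (1 + t) * (1 + t) ^ j).
    { assert (0 <= (1 + t) ^ j) by (apply pow_le; lra). nra. }
    assert (H2 : t ^ S j <= (1 + t) * (1 + t) ^ j).
    { change ((1 + t) * (1 + t) ^ j) with ((1 + t) ^ S j). apply pow_incr; lra. }
    assert (Hc := cA_nonneg j u Hu).
    assert (Hs : 0 <= INR (S j) / u) by (apply Rdiv_le_0_compat; [apply pos_INR | auto]).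
    assert (Hiu : 0 < / u) by (apply Rinv_0_lt_compat; auto).
    apply Rle_trans with (INR (S j) / u * (cA j u * (1 + t) ^ j * exp (- (u * t)))
                          + t ^ S j * exp (- (u * t)) / u).
    + apply Rplus_le_compat_r. apply Rmult_le_compat_l; auto.
    + unfold Rdiv.
      assert (INR (S j) * / u * (cA j u * (1 + t) ^ j * exp (- (u * t))) <=
              INR (S j) * / u * cA j u * ((1 + t) * (1 + t) ^ j) * exp (- (u * t))).
      { replace (INR (S j) * / u * (cA j u * (1 + t) ^ j * exp (- (u * t)))) with
          (INR (S j) * / u * cA j u * (1 + t) ^ j * exp (- (u * t))) by ring.
        apply Rmult_le_compat_r. lra. apply Rmult_le_compat_l; auto.
        apply Rmult_le_pos; auto. }
      assert (t ^ S j * exp (- (u * t)) * / u <= / u * ((1 + t) * (1 + t) ^ j) * exp (- (u * t))).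
      { replace (t ^ S j * exp (- (u * t)) * / u) with (/ u * t ^ S j * exp (- (u * t))) by ring.
        apply Rmult_le_compat_r. lra. apply Rmult_le_compat_l; lra. }
      nra.
Qed.

Lemma exp_pow_neg (t : R) (k : nat) : exp (- t) ^ k = exp (- (INR k * t)).
Proof.
  induction k.
  - simpl. rewrite Rmult_0_l, Ropp_0, exp_0. auto.
  - change (exp (- t) ^ S k) with (exp (- t) * exp (- t) ^ k). rewrite IHk, <- exp_plus.
    f_equal. rewrite S_INR. ring.
Qed.

Lemma powexp_cont (j : nat) (u t : R) : continuous (fun t => t ^ j * exp (- (u * t))) t.
Proof. apply (@ex_derive_continuous R_AbsRing R_NormedModule). auto_derive. auto. Qed.

Lemma iA (j : nat) (u e L : R) : 0 < u -> e <= L ->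
  is_RInt (fun t => t ^ j * exp (- (u * t))) e L (A j u e - A j u L).
Proof.
  intros Hu HeL.
  eapply is_RInt_val. apply (is_RInt_derivR (fun t => - A j u t)); auto.
  - intros t Ht. eapply is_derive_val. apply (is_derive_opp (A j u)). apply A_deriv; auto.
    unfold opp; simpl. ring.
  - intros; apply powexp_cont.
  - ring.
Qed.

Fixpoint phiN (N : nat) (t : R) : R :=
  match N with O => 0 | S N' => phiN N' t + (1 + INR N') * exp (- t) ^ N' end.

Fixpoint SN (j N : nat) (x e L : R) : R :=
  match N with
  | O => 0
  | S N' => SN j N' x e L + (1 + INR N') * (A j (x + INR N') e - A j (x + INR N') L)
  end.

Lemma iN (j N : nat) (x e L : R) : 0 < x -> e <= L ->
  is_RInt (fun t => t ^ j * exp (- (x * t)) * phiN N t) e L (SN j N x e L).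
Proof.
  intros Hx HeL. induction N.
  - simpl. eapply is_RInt_ext. 2: eapply is_RInt_val. 2: apply (@is_RInt_const R_NormedModule e L 0).
    intros; simpl; ring. unfold scal; simpl; unfold mult; simpl; ring.
  - cbn [phiN SN].
    eapply is_RInt_ext. 2: apply is_RInt_plusR. 2: apply IHN.
    2: apply is_RInt_scalR with (c := 1 + INR N). 2: apply iA.
    + intros t Ht. simpl. rewrite exp_pow_neg.
      replace (exp (- ((x + INR N) * t))) with (exp (- (x * t)) * exp (- (INR N * t))).
      ring. rewrite <- exp_plus. f_equal. ring.
    + pose proof (pos_INR N); lra.
    + auto.
Qed.

Lemma phiN_closed (N : nat) (t : R) :
  phiN N t * (1 - exp (- t)) ^ 2 = 1 - (INR N + 1) * exp (- t) ^ N + INR N * exp (- t) ^ S N.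
Proof.
  induction N.
  - simpl. ring.
  - cbn [phiN]. rewrite Rmult_plus_distr_r, IHN. rewrite !S_INR.
    change (exp (- t) ^ S (S N)) with (exp (- t) * (exp (- t) * exp (- t) ^ N)).
    change (exp (- t) ^ S N) with (exp (- t) * exp (- t) ^ N). ring.
Qed.

Lemma phi_diff_bound (N : nat) (t e : R) : 0 < e -> e <= t ->
  0 <= phi t - phiN N t <= (INR N + 1) * exp (- e) ^ N / (1 - exp (- e)) ^ 2.
Proof.
  intros He Het.
  set (z := exp (- t)). set (q := exp (- e)).
  assert (Hz : 0 < z) by apply exp_pos.
  assert (Hz1 : z < 1) by (apply exp_neg_lt1; lra).
  assert (Hq1 : q < 1) by (apply exp_neg_lt1; lra).
  assert (Hzq : z <= q) by (unfold z, q; destruct (Req_dec e t); [subst; lra|]; left; apply exp_increasing; lra).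
  assert (E : phi t - phiN N t = z ^ N * ((INR N + 1) - INR N * z) / (1 - z) ^ 2).
  { unfold phi. fold z. pose proof (phiN_closed N t) as Hc. fold z in Hc.
    apply (Rmult_eq_reg_r ((1 - z) ^ 2)). 2: apply pow_nonzero; lra.
    unfold Rdiv. rewrite Rmult_minus_distr_r, Hc. change (z ^ S N) with (z * z ^ N).
    field. lra. }
  rewrite E. pose proof (pos_INR N).
  assert (HzN : 0 < z ^ N) by (apply pow_lt; auto).
  assert (Hz2 : 0 < (1 - z) ^ 2) by (apply pow_lt; lra).
  split.
  - apply Rdiv_le_0_compat; auto. apply Rmult_le_pos. lra. nra.
  - apply Rle_trans with ((INR N + 1) * z ^ N / (1 - z) ^ 2).
    + unfold Rdiv. apply Rmult_le_compat_r. left; apply Rinv_0_lt_compat; auto.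
      assert (0 <= INR N * z) by nra. nra.
    + unfold Rdiv. apply Rmult_le_compat.
      * apply Rmult_le_pos; lra.
      * left; apply Rinv_0_lt_compat; auto.
      * apply Rmult_le_compat_l. lra. apply pow_incr; lra.
      * apply Rinv_le_contravar. apply pow_lt; lra. apply pow_incr; lra.
Qed.

Lemma sum_n_SN (j : nat) (x e L : R) (N : nat) :
  sum_n (fun k => (1 + INR k) * (A j (x + INR k) e - A j (x + INR k) L)) N = SN j (S N) x e L.
Proof.
  induction N.
  - rewrite sum_O. simpl. ring.
  - rewrite sum_Sn, IHN. cbn [SN]. unfold plus; simpl. auto.
Qed.

Lemma rep_finite (j : nat) (x e L : R) : 0 < x -> 0 < e -> e <= L ->
  is_series (fun k => (1 + INR k) * (A j (x + INR k) e - A j (x + INR k) L)) (RInt (Kf x j) e L).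
Proof.
  intros Hx He HeL.
  apply is_lim_seq_is_series.
  apply is_lim_seq_ext with (fun N => SN j (S N) x e L).
  { intros; symmetry; apply sum_n_SN. }
  apply (is_lim_seq_incr_1 (fun N => SN j N x e L)).
  set (I := RInt (Kf x j) e L).
  assert (HI : is_RInt (Kf x j) e L I).
  { apply (@RInt_correct R_CompleteNormedModule). apply (@ex_RInt_continuous R_CompleteNormedModule).
    intros z Hz. rewrite Rmin_left, Rmax_right in Hz by lra. apply Kf_cont; lra. }
  set (q := exp (- e)).
  assert (Hq1 : q < 1) by (apply exp_neg_lt1; lra).
  assert (Hq0 : 0 < q) by apply exp_pos.
  set (C0 := (L - e) * L ^ j / (1 - q) ^ 2).
  set (C1 := exp e * INR (Factorial.fact 2) / e ^ 2).
  assert (HC0 : 0 <= C0).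
  { unfold C0. apply Rdiv_le_0_compat. apply Rmult_le_pos. lra. apply pow_le; lra.
    apply pow_lt; lra. }
  cut (is_lim_seq (fun N => SN j N x e L - I) 0).
  { intros H. apply is_lim_seq_ext with (fun N => (SN j N x e L - I) + I).
    intros; ring. replace (Finite I) with (Finite (0 + I)) by (f_equal; ring).
    apply is_lim_seq_plus'; auto. apply is_lim_seq_const. }
  apply (squeeze0 _ (C0 * C1) 1); try lra.
  intros N.
  assert (Hd : is_RInt (fun t => Kf x j t - t ^ j * exp (- (x * t)) * phiN N t) e L (I - SN j N x e L)).
  { exact (is_RInt_minus _ _ e L _ _ HI (iN j N x e L Hx HeL)). }
  assert (Hb := @norm_RInt_le_const R_NormedModule (fun t => Kf x j t - t ^ j * exp (- (x * t)) * phiN N t) e L (I - SN j N x e L) ((INR N + 1) * q ^ N * (L ^ j / (1 - q) ^ 2)) HeL).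
  specialize (Hb ltac:(intros t Ht;
    change (norm (Kf x j t - t ^ j * exp (- (x * t)) * phiN N t))
      with (Rabs (Kf x j t - t ^ j * exp (- (x * t)) * phiN N t));
    unfold Kf;
    replace (t ^ j * exp (- (x * t)) * phi t - t ^ j * exp (- (x * t)) * phiN N t) with
      (t ^ j * exp (- (x * t)) * (phi t - phiN N t)) by ring;
    destruct (phi_diff_bound N t e He ltac:(lra)) as [B1 B2];
    assert (0 < exp (- (x * t))) by apply exp_pos;
    assert (exp (- (x * t)) <= 1) by (rewrite <- exp_0; destruct (Req_dec (x * t) 0);
       [rewrite H0, Ropp_0; lra | left; apply exp_increasing; nra]);
    assert (0 <= t ^ j) by (apply pow_le; lra);
    assert (t ^ j <= L ^ j) by (apply pow_incr; lra);
    rewrite Rabs_right by (apply Rle_ge; apply Rmult_le_pos; [apply Rmult_le_pos; lra | lra]);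
    fold q in B2;
    apply Rle_trans with (L ^ j * 1 * ((INR N + 1) * q ^ N / (1 - q) ^ 2));
    [apply Rmult_le_compat; try lra; try (apply Rmult_le_pos; lra); apply Rmult_le_compat; lra
    | right; field; nz])).
  specialize (Hb Hd).
  change (norm (I - SN j N x e L)) with (Rabs (I - SN j N x e L)) in Hb.
  rewrite Rabs_minus_sym.
  eapply Rle_trans. apply Hb.
  assert (HP := polyexp_bound e (INR N) 1 He (pos_INR N)).
  rewrite pow_1 in HP.
  assert (Eq : q ^ N = exp (- (e * INR N))).
  { unfold q. rewrite exp_pow_neg. f_equal. ring. }
  replace ((L - e) * ((INR N + 1) * q ^ N * (L ^ j / (1 - q) ^ 2)))
    with (C0 * ((1 + INR N) * q ^ N)) by (unfold C0; field; nz).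
  replace (C0 * C1 / (INR N + 1)) with (C0 * (C1 / (1 + INR N))) by (field; pose proof (pos_INR N); lra).
  apply Rmult_le_compat_l; auto. rewrite Eq. unfold C1. exact HP.
Qed.

Definition en (n : nat) : R := / (INR n + 2).
Definition Ln (n : nat) : R := INR n + 2.

Lemma en_pos n : 0 < en n.
Proof. unfold en. pose proof (pos_INR n). apply Rinv_0_lt_compat; lra. Qed.

Lemma en_le_half n : en n <= / 2.
Proof. unfold en. pose proof (pos_INR n). apply Rinv_le_contravar; lra. Qed.

Lemma en_le_Ln n : en n <= Ln n.
Proof. pose proof (en_le_half n). unfold Ln. pose proof (pos_INR n). lra. Qed.

Lemma lim_en : is_lim_seq en 0.
Proof.
  apply is_lim_seq_ext with (fun n => 1 / (INR n + 2)).
  intros; unfold en, Rdiv; ring. apply lim_C_div; lra.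
Qed.

Lemma is_lim_seq_scalR (u : nat -> R) (a l : R) : is_lim_seq u l -> is_lim_seq (fun n => a * u n) (a * l).
Proof. intros H. apply (is_lim_seq_scal_l u a l H). Qed.

Lemma K_lim (j : nat) (x : R) : (2 <= j)%nat -> 0 < x ->
  is_lim_seq (fun n => RInt (Kf x j) (en n) (Ln n)) (INR (Factorial.fact j) * T (S j) x).
Proof.
  intros Hj Hx.
  set (a := fun n k => (1 + INR k) * (A j (x + INR k) (en n) - A j (x + INR k) (Ln n))).
  set (l := fun k => (1 + INR k) * A j (x + INR k) 0).
  assert (Hl : forall k, l k = INR (Factorial.fact j) * trm (S j) x k).
  { intros k. unfold l, trm; cbv beta. pose proof (pos_INR k). rewrite A_at0 by lra. field; nz. }
  apply is_lim_seq_ext with (fun n => Series (a n)).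
  { intros n. apply is_series_unique. apply rep_finite; auto.
    apply en_pos. apply en_le_Ln. }
  replace (INR (Factorial.fact j) * T (S j) x) with (Series l).
  2:{ rewrite (Series_ext l (fun k => INR (Factorial.fact j) * trm (S j) x k)) by auto.
      rewrite Series_scal_l. reflexivity. }
  apply series_dom with l.
  - intros n k. unfold a, l. pose proof (pos_INR k).
    assert (Hu : 0 < x + INR k) by lra.
    pose proof (en_pos n). pose proof (en_le_Ln n).
    assert (G1 := A_nonneg j _ (Ln n) Hu ltac:(lra)).
    assert (G2 := A_decr j _ (en n) (Ln n) Hu ltac:(lra) ltac:(lra)).
    assert (G3 := A_decr j _ 0 (en n) Hu ltac:(lra) ltac:(lra)).
    rewrite Rabs_mult, Rabs_right by lra. rewrite Rabs_right by lra.
    apply Rmult_le_compat_l; lra.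
  - apply (ex_series_ext (fun k => scal (INR (Factorial.fact j)) (trm (S j) x k))).
    intros; rewrite Hl; reflexivity.
    apply (@ex_series_scal_l R_AbsRing R_NormedModule). apply ex_T; auto. lia.
  - intros k. unfold a, l. pose proof (pos_INR k).
    assert (Hu : 0 < x + INR k) by lra.
    replace ((1 + INR k) * A j (x + INR k) 0) with ((1 + INR k) * (A j (x + INR k) 0 - 0)) by ring.
    apply is_lim_seq_scalR. apply is_lim_seq_minus'.
    + apply (is_lim_seq_continuous (A j (x + INR k)) en 0). apply A_cont; auto. apply lim_en.
    + apply (squeeze0 _ (cA j (x + INR k) * (exp (x + INR k) * INR (Factorial.fact (S j)) / (x + INR k) ^ S j)) 3).
      lra. intros n.
      assert (HL : 0 <= Ln n) by (unfold Ln; pose proof (pos_INR n); lra).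
      rewrite Rabs_right by (apply Rle_ge, A_nonneg; auto).
      eapply Rle_trans. apply A_bound; auto.
      rewrite Rmult_assoc.
      replace (cA j (x + INR k) * (exp (x + INR k) * INR (Factorial.fact (S j)) / (x + INR k) ^ S j) / (INR n + 3))
        with (cA j (x + INR k) * (exp (x + INR k) * INR (Factorial.fact (S j)) / (x + INR k) ^ S j / (1 + Ln n))).
      2:{ unfold Ln. field. split. apply pow_nonzero; lra. pose proof (pos_INR n); lra. }
      apply Rmult_le_compat_l. apply cA_nonneg; auto.
      apply polyexp_bound; auto.
Qed.

Lemma pow_le_one (t : R) (k : nat) : 0 <= t <= 1 -> t ^ k <= 1.
Proof.
  intros H. induction k. simpl; lra. simpl.
  assert (0 <= t ^ k) by (apply pow_le; lra). nra.
Qed.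

Lemma t2phi_le (t : R) : 0 < t -> t ^ 2 * phi t <= (1 + t) ^ 2.
Proof.
  intros Ht. unfold phi. pose proof (exp_neg_lt1 t Ht). pose proof (exp_pos (- t)).
  assert (H1 : t <= (1 + t) * (1 - exp (- t))).
  { assert (1 + t <= exp t) by apply exp_ineq1_le.
    assert (exp t * exp (- t) = 1) by (rewrite <- exp_plus; replace (t + - t) with 0 by ring; apply exp_0).
    nra. }
  assert (H2 : 0 < (1 - exp (- t)) ^ 2) by (apply pow_lt; lra).
  apply (Rmult_le_reg_r ((1 - exp (- t)) ^ 2)); auto.
  rewrite Rmult_assoc, Rinv_l by lra. rewrite Rmult_1_r.
  rewrite <- Rpow_mult_distr. apply pow_incr. lra.
Qed.

Lemma D_bound (x tau : R) (m : nat) (t : R) : (2 <= m)%nat -> 0 < x -> 0 < tau -> 0 < t ->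
  Rabs (Dfun x tau m t) <= (t + tau) * t ^ (m - 2) * (1 + t) ^ 2 * exp (- (x * t)).
Proof.
  intros Hm Hx Htau Ht. unfold Dfun.
  replace (t ^ m) with (t ^ (m - 2) * t ^ 2) by (rewrite <- pow_add; f_equal; lia).
  pose proof (t2phi_le t Ht). pose proof (phi_pos t Ht). pose proof (exp_pos (- (x * t))).
  assert (0 <= t ^ (m - 2)) by (apply pow_le; lra).
  rewrite !Rabs_mult. rewrite (Rabs_right (t ^ (m - 2))) by lra.
  rewrite (Rabs_right (t ^ 2)) by (apply Rle_ge, pow_le; lra).
  rewrite (Rabs_right (exp _)) by lra. rewrite (Rabs_right (phi t)) by lra.
  assert (Rabs (t - tau) <= t + tau) by (split_Rabs; lra).
  assert (0 <= t ^ (m - 2) * exp (- (x * t))) by (apply Rmult_le_pos; lra).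
  assert (0 <= t ^ 2) by (apply pow_le; lra).
  replace (Rabs (t - tau) * (t ^ (m - 2) * t ^ 2) * exp (- (x * t)) * phi t) with
    (Rabs (t - tau) * (t ^ (m - 2) * exp (- (x * t))) * (t ^ 2 * phi t)) by ring.
  replace ((t + tau) * t ^ (m - 2) * (1 + t) ^ 2 * exp (- (x * t))) with
    ((t + tau) * (t ^ (m - 2) * exp (- (x * t))) * (1 + t) ^ 2) by ring.
  apply Rmult_le_compat; try lra.
  apply Rmult_le_pos; [apply Rabs_pos | lra]. apply Rmult_le_pos; lra.
  apply Rmult_le_compat_r; lra.
Qed.

Lemma D_lim_e (x tau : R) (m : nat) : (3 <= m)%nat -> 0 < x -> 0 < tau ->
  is_lim_seq (fun n => Dfun x tau m (en n)) 0.
Proof.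
  intros Hm Hx Htau. apply (squeeze0 _ (4 * (1 + tau)) 2). lra.
  intros n. pose proof (en_pos n). pose proof (en_le_half n).
  eapply Rle_trans. apply D_bound; auto; lia.
  set (t := en n) in *.
  assert (t ^ (m - 2) <= t).
  { replace (m - 2)%nat with (S (m - 3)) by lia. simpl.
    assert (t ^ (m - 3) <= 1) by (apply pow_le_one; lra).
    assert (0 <= t ^ (m - 3)) by (apply pow_le; lra). nra. }
  assert ((1 + t) ^ 2 <= 4) by (simpl; nra).
  assert (exp (- (x * t)) <= 1) by (rewrite <- exp_0; left; apply exp_increasing; nra).
  assert (0 <= t ^ (m - 2)) by (apply pow_le; lra).
  assert (0 < exp (- (x * t))) by apply exp_pos.
  replace (4 * (1 + tau) / (INR n + 2)) with (4 * (1 + tau) * t) by (unfold t, en; field; pose proof (pos_INR n); lra).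
  assert (0 <= (t + tau) * t ^ (m - 2)) by nra.
  assert ((t + tau) * t ^ (m - 2) <= (1 + tau) * t) by nra.
  assert (0 <= (1 + t) ^ 2) by (apply pow_le; lra).
  assert ((t + tau) * t ^ (m - 2) * (1 + t) ^ 2 <= (1 + tau) * t * 4) by nra.
  assert (0 <= (t + tau) * t ^ (m - 2) * (1 + t) ^ 2) by nra.
  nra.
Qed.

Lemma D_lim_L (x tau : R) (m : nat) : (3 <= m)%nat -> 0 < x -> 0 < tau ->
  is_lim_seq (fun n => Dfun x tau m (Ln n)) 0.
Proof.
  intros Hm Hx Htau.
  set (C := exp x * INR (Factorial.fact (S (S m))) / x ^ S (S m)).
  apply (squeeze0 _ ((1 + tau) * C) 3). lra.
  intros n. assert (Ht : 0 < Ln n) by (unfold Ln; pose proof (pos_INR n); lra).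
  eapply Rle_trans. apply D_bound; auto; lia.
  set (t := Ln n) in *.
  assert (HP := polyexp_bound x t (S m) Hx ltac:(lra)).
  assert (Hpow : t ^ (m - 2) * (1 + t) ^ 2 <= (1 + t) ^ m).
  { replace m with ((m - 2) + 2)%nat at 2 by lia. rewrite pow_add.
    apply Rmult_le_compat_r. apply pow_le; lra. apply pow_incr; lra. }
  assert (Htt : t + tau <= (1 + tau) * (1 + t)) by nra.
  assert (0 < exp (- (x * t))) by apply exp_pos.
  assert (0 <= t ^ (m - 2) * (1 + t) ^ 2) by (apply Rmult_le_pos; apply pow_le; lra).
  apply Rle_trans with ((1 + tau) * ((1 + t) ^ S m * exp (- (x * t)))).
  - change ((1 + t) ^ S m) with ((1 + t) * (1 + t) ^ m).
    replace ((t + tau) * t ^ (m - 2) * (1 + t) ^ 2 * exp (- (x * t))) with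
      ((t + tau) * (t ^ (m - 2) * (1 + t) ^ 2) * exp (- (x * t))) by ring.
    assert (0 <= t + tau) by lra.
    assert ((t + tau) * (t ^ (m - 2) * (1 + t) ^ 2) <= (1 + tau) * (1 + t) * (1 + t) ^ m).
    { apply Rle_trans with ((1 + tau) * (1 + t) * (t ^ (m - 2) * (1 + t) ^ 2)).
      apply Rmult_le_compat_r; lra.
      apply Rmult_le_compat_l. nra. exact Hpow. }
    nra.
  - replace ((1 + tau) * C / (INR n + 3)) with ((1 + tau) * (C / (1 + t))) by
      (unfold t, Ln; field; pose proof (pos_INR n); lra).
    apply Rmult_le_compat_l. lra. unfold C. exact HP.
Qed.

Lemma key_ineq (m : nat) (x : R) : (3 <= m)%nat -> 0 < x ->
  (INR m - 2) * (INR m + 1) * (T m x * T (S (S m)) x) <= (INR m - 1) * INR m * T (S m) x ^ 2.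
Proof.
  intros Hm Hx.
  assert (H0 : 0 < T m x) by (apply T_pos; auto).
  assert (H1 : 0 < T (S m) x) by (apply T_pos; auto; lia).
  assert (H2 : 0 < T (S (S m)) x) by (apply T_pos; auto; lia).
  set (tau := (INR m + 1) * T (S (S m)) x / T (S m) x).
  assert (Htau : 0 < tau).
  { unfold tau. apply Rdiv_lt_0_compat; auto. apply Rmult_lt_0_compat; auto. pose proof (pos_INR m); lra. }
  set (F := fun n => Dfun x tau m (Ln n) - Dfun x tau m (en n)
    + (x - nu tau) * RInt (Kf x (S m)) (en n) (Ln n)
    + (nu tau * tau - tau * x - (INR m - 1)) * RInt (Kf x m) (en n) (Ln n)
    + tau * (INR m - 2) * RInt (Kf x (pred m)) (en n) (Ln n)).
  assert (HF : forall n, F n <= 0).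
  { intros n. apply finite_ineq; auto. lia. apply en_pos. apply en_le_Ln. }
  set (Lval := 0 - 0
    + (x - nu tau) * (INR (Factorial.fact (S m)) * T (S (S m)) x)
    + (nu tau * tau - tau * x - (INR m - 1)) * (INR (Factorial.fact m) * T (S m) x)
    + tau * (INR m - 2) * (INR (Factorial.fact (pred m)) * T (S (pred m)) x)).
  assert (HL : is_lim_seq F Lval).
  { unfold F, Lval.
    apply is_lim_seq_plus'. apply is_lim_seq_plus'. apply is_lim_seq_plus'.
    apply is_lim_seq_minus'. apply D_lim_L; auto. apply D_lim_e; auto.
    apply is_lim_seq_scalR. apply K_lim; auto; lia.
    apply is_lim_seq_scalR. apply K_lim; auto; lia.
    apply is_lim_seq_scalR. apply K_lim; auto; lia. }
  assert (HLe : Lval <= 0).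
  { pose proof (is_lim_seq_le F (fun _ => 0) Lval 0 HF HL (is_lim_seq_const 0)). simpl in H. auto. }
  unfold Lval in HLe.
  destruct m as [|m1]. lia.
  replace (S (pred (S m1))) with (S m1) in HLe by reflexivity.
  replace (pred (S m1)) with m1 in HLe by reflexivity.
  change (Factorial.fact (S (S m1))) with (S (S m1) * Factorial.fact (S m1))%nat in HLe.
  change (Factorial.fact (S m1)) with (S m1 * Factorial.fact m1)%nat in HLe.
  rewrite !mult_INR in HLe.
  set (Fm := INR (Factorial.fact m1)) in HLe.
  assert (HFm : 0 < Fm) by apply INR_fact_lt_0.
  set (M := INR (S m1)) in *.
  replace (INR (S (S m1))) with (M + 1) in HLe by (unfold M; rewrite (S_INR (S m1)); auto).
  set (T0 := T (S m1) x) in *. set (T1 := T (S (S m1)) x) in *. set (T2 := T (S (S (S m1))) x) in *.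
  assert (Et : tau * T1 = (M + 1) * T2).
  { unfold tau. fold M T1 T2. field. lra. }
  replace ((nu tau * tau - tau * x - (M - 1)) * (M * Fm * T1)) with
    ((nu tau - x) * (M * Fm) * (tau * T1) - (M - 1) * (M * Fm * T1)) in HLe by ring.
  rewrite Et in HLe.
  assert (HLe2 : - (M - 1) * M * Fm * T1 + tau * (M - 2) * Fm * T0 <= 0) by lra.
  assert (HLe3 : (- (M - 1) * M * Fm * T1 + tau * (M - 2) * Fm * T0) * T1 <= 0).
  { apply Rmult_le_0_r; auto; lra. }
  replace ((- (M - 1) * M * Fm * T1 + tau * (M - 2) * Fm * T0) * T1) with
    (Fm * (- (M - 1) * M * T1 ^ 2 + (M - 2) * T0 * (tau * T1))) in HLe3 by ring.
  rewrite Et in HLe3.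
  assert (0 <= - (- (M - 1) * M * T1 ^ 2 + (M - 2) * T0 * ((M + 1) * T2))).
  { apply (Rmult_le_reg_l Fm); auto. lra. }
  nra.
Qed.

Section Superadd.
Variable H : R -> R.
Hypothesis Hnn : forall e, 0 < e -> 0 <= H e.

Lemma chord_decomp (x z e : R) : 0 < e -> e < x -> x < z ->
  let l := (z - x) / (z - e) in
  0 < l < 1 /\ x = l * e + (1 - l) * z /\ 1 - l = (x - e) / (z - e).
Proof.
  intros He Hex Hxz l. unfold l. split; [split|split].
  - apply Rdiv_lt_0_compat; lra.
  - apply (Rmult_lt_reg_r (z - e)). lra. field_simplify; lra.
  - field. lra.
  - field. lra.
Qed.

Section Cvx.
Hypothesis Hcvx : forall x y t, 0 < x -> 0 < y -> x <> y -> 0 < t < 1 ->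
  H (t * x + (1 - t) * y) < t * H x + (1 - t) * H y.
Variables K s : R.
Hypothesis HK : 0 <= K.
Hypothesis Hs : 0 < s.
Hypothesis Hsmall : forall e, 0 < e -> H e <= K * Rpower e s.

Lemma cvx_stepA (x z : R) : 0 < x -> x < z -> H x <= x / z * H z.
Proof.
  intros Hx Hxz.
  assert (Hz := Hnn z ltac:(lra)).
  assert (Hall : forall e, 0 < e -> e < x -> H x <= K * Rpower e s + x / z * H z).
  { intros e He Hex.
    destruct (chord_decomp x z e He Hex Hxz) as [Hl [Ex E1]].
    set (l := (z - x) / (z - e)) in *.
    assert (Hlt := Hcvx e z l He ltac:(lra) ltac:(lra) Hl).
    rewrite <- Ex in Hlt.
    pose proof (Hsmall e He). pose proof (Hnn e He).
    assert (l * H e <= K * Rpower e s).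
    { apply Rle_trans with (1 * H e). apply Rmult_le_compat_r; lra. lra. }
    assert ((1 - l) * H z <= x / z * H z).
    { apply Rmult_le_compat_r; auto. rewrite E1.
      apply (Rmult_le_reg_r (z * (z - e))). nra.
      field_simplify; try lra. nra. }
    lra. }
  destruct (Rle_dec (H x) (x / z * H z)) as [Hle|Hgt]; auto.
  exfalso. set (d := H x - x / z * H z). assert (Hd : 0 < d) by (unfold d; lra).
  set (e := Rmin (x / 2) (Rpower (d / (K + 1)) (/ s))).
  assert (He : 0 < e).
  { unfold e. apply Rmin_pos. lra. apply Rpower_pos. }
  assert (Hex : e < x) by (unfold e; pose proof (Rmin_l (x / 2) (Rpower (d / (K + 1)) (/ s))); lra).
  assert (Hes : Rpower e s <= d / (K + 1)).
  { apply Rle_trans with (Rpower (Rpower (d / (K + 1)) (/ s)) s).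
    apply Rpower_le_pos; auto. lra. apply Rmin_r.
    rewrite Rpower_mult. replace (/ s * s) with 1 by (field; lra).
    rewrite Rpower_1. lra. apply Rdiv_lt_0_compat; lra. }
  specialize (Hall e He Hex).
  assert (K * Rpower e s <= K * (d / (K + 1))) by (apply Rmult_le_compat_l; auto).
  assert (K * (d / (K + 1)) < d).
  { apply (Rmult_lt_reg_r (K + 1)). lra. field_simplify; lra. }
  unfold d in *. lra.
Qed.

Lemma cvx_stepB (x z : R) : 0 < x -> x < z -> H x < x / z * H z.
Proof.
  intros Hx Hxz. set (a := x / 2).
  assert (Ha : 0 < a < x) by (unfold a; lra).
  destruct (chord_decomp x z a ltac:(lra) ltac:(lra) Hxz) as [Hl [Ex E1]].
  set (l := (z - x) / (z - a)) in *.
  assert (Hlt := Hcvx a z l ltac:(lra) ltac:(lra) ltac:(lra) Hl).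
  rewrite <- Ex in Hlt.
  assert (HA := cvx_stepA a z ltac:(lra) ltac:(lra)).
  assert (l * H a <= l * (a / z * H z)) by (apply Rmult_le_compat_l; lra).
  assert (E2 : l * (a / z * H z) + (1 - l) * H z = x / z * H z).
  { rewrite Ex. field. lra. }
  lra.
Qed.

Lemma cvx_superadd (x y : R) : 0 < x -> 0 < y -> H x + H y < H (x + y).
Proof.
  intros Hx Hy.
  assert (H1 := cvx_stepB x (x + y) Hx ltac:(lra)).
  assert (H2 := cvx_stepB y (x + y) Hy ltac:(lra)).
  assert (x / (x + y) * H (x + y) + y / (x + y) * H (x + y) = H (x + y)) by (field; lra).
  lra.
Qed.
End Cvx.

Section Ccv.
Hypothesis Hccv : forall x y t, 0 < x -> 0 < y -> x <> y -> 0 < t < 1 ->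
  t * H x + (1 - t) * H y < H (t * x + (1 - t) * y).

Lemma ccv_stepA (x z : R) : 0 < x -> x < z -> x / z * H z <= H x.
Proof.
  intros Hx Hxz.
  assert (Hz := Hnn z ltac:(lra)).
  assert (Hall : forall e, 0 < e -> e < x -> (x - e) / (z - e) * H z <= H x).
  { intros e He Hex.
    destruct (chord_decomp x z e He Hex Hxz) as [Hl [Ex E1]].
    set (l := (z - x) / (z - e)) in *.
    assert (Hlt := Hccv e z l He ltac:(lra) ltac:(lra) Hl).
    rewrite <- Ex in Hlt. rewrite <- E1.
    pose proof (Hnn e He). assert (0 <= l * H e) by (apply Rmult_le_pos; lra). lra. }
  destruct (Rle_dec (x / z * H z) (H x)) as [Hle|Hgt]; auto.
  exfalso. set (d := x / z * H z - H x). assert (Hd : 0 < d) by (unfold d; lra).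
  set (e := Rmin (x / 2) (d * z / (4 * (H z + 1)))).
  assert (He : 0 < e).
  { unfold e. apply Rmin_pos. lra. apply Rdiv_lt_0_compat. nra. lra. }
  assert (Hex : e < x) by (unfold e; pose proof (Rmin_l (x / 2) (d * z / (4 * (H z + 1)))); lra).
  assert (Hez : e <= d * z / (4 * (H z + 1))) by apply Rmin_r.
  specialize (Hall e He Hex).
  assert (Hdiff : x / z - (x - e) / (z - e) <= 2 * e / z).
  { apply (Rmult_le_reg_r (z * (z - e))). nra.
    field_simplify; try lra. nra. }
  assert ((x / z - (x - e) / (z - e)) * H z <= 2 * e / z * H z) by (apply Rmult_le_compat_r; auto).
  assert (2 * e / z * H z < d).
  { apply Rle_lt_trans with (2 * (d * z / (4 * (H z + 1))) / z * H z).
    apply Rmult_le_compat_r; auto. unfold Rdiv. apply Rmult_le_compat_r.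
    left; apply Rinv_0_lt_compat; lra. lra.
    replace (2 * (d * z / (4 * (H z + 1))) / z * H z) with (d * (H z / (2 * (H z + 1)))) by (field; lra).
    assert (H z / (2 * (H z + 1)) < 1).
    { apply (Rmult_lt_reg_r (2 * (H z + 1))). lra. field_simplify; lra. }
    nra. }
  unfold d in *. nra.
Qed.

Lemma ccv_stepB (x z : R) : 0 < x -> x < z -> x / z * H z < H x.
Proof.
  intros Hx Hxz. set (a := x / 2).
  assert (Ha : 0 < a < x) by (unfold a; lra).
  destruct (chord_decomp x z a ltac:(lra) ltac:(lra) Hxz) as [Hl [Ex E1]].
  set (l := (z - x) / (z - a)) in *.
  assert (Hlt := Hccv a z l ltac:(lra) ltac:(lra) ltac:(lra) Hl).
  rewrite <- Ex in Hlt.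
  assert (HA := ccv_stepA a z ltac:(lra) ltac:(lra)).
  assert (l * (a / z * H z) <= l * H a) by (apply Rmult_le_compat_l; lra).
  assert (E2 : l * (a / z * H z) + (1 - l) * H z = x / z * H z).
  { rewrite Ex. field. lra. }
  lra.
Qed.

Lemma ccv_subadd (x y : R) : 0 < x -> 0 < y -> H (x + y) < H x + H y.
Proof.
  intros Hx Hy.
  assert (H1 := ccv_stepB x (x + y) Hx ltac:(lra)).
  assert (H2 := ccv_stepB y (x + y) Hy ltac:(lra)).
  assert (x / (x + y) * H (x + y) + y / (x + y) * H (x + y) = H (x + y)) by (field; lra).
  lra.
Qed.
End Ccv.
End Superadd.

Lemma base_eq (n : nat) (x : R) :
  (-1) ^ (n + 1) * psi2 n x = INR (Factorial.fact n) * T (n + 1) x.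
Proof.
  unfold psi2. change (Series (fun k : nat => (1 + INR k) / (x + INR k) ^ (n + 1))) with (T (n + 1) x).
  assert (E : (-1) ^ (n + 1) * (-1) ^ (n + 1) = 1).
  { rewrite <- Rpow_mult_distr. replace (-1 * -1) with 1 by ring. apply pow1. }
  replace ((-1) ^ (n + 1) * ((-1) ^ (n + 1) * INR (Factorial.fact n) * T (n + 1) x))
    with ((-1) ^ (n + 1) * (-1) ^ (n + 1) * (INR (Factorial.fact n) * T (n + 1) x)) by ring.
  rewrite E. ring.
Qed.

Lemma G_eq (n : nat) (b r x : R) : (3 <= n)%nat -> 0 < b -> 0 < x ->
  G n r x = Rpower (INR (Factorial.fact n)) r * Rpower (Phi (n + 1) b x) (- r / b).
Proof.
  intros Hn Hb Hx. unfold G. rewrite base_eq.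
  rewrite <- Rpower_mult_distr. 2: apply INR_fact_lt_0. 2: apply T_pos; auto; lia.
  unfold Phi. rewrite Rpower_mult. f_equal. f_equal. field. lra.
Qed.

Lemma Phi_inc (m : nat) (b x y : R) : (3 <= m)%nat -> 0 < b -> 0 < x -> x < y -> Phi m b x < Phi m b y.
Proof.
  intros Hm Hb Hx Hxy. unfold Phi.
  apply Rpower_lt_neg. lra. apply T_pos; auto; lra. apply T_sdecr; auto; lia.
Qed.

Lemma d2Phi_sign (m : nat) (b x : R) : (3 <= m)%nat -> 0 < b ->
  d2Phi m b x = b * INR m * Rpower (T m x) (- b - 2) *
    ((b + 1) * INR m * T (S m) x ^ 2 - INR (S m) * T m x * T (S (S m)) x).
Proof. reflexivity. Qed.

Lemma g_concave (m : nat) : (3 <= m)%nat ->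
  forall x y t, 0 < x -> 0 < y -> 0 < t < 1 ->
   t * Phi m (/ INR m) x + (1 - t) * Phi m (/ INR m) y <= Phi m (/ INR m) (t * x + (1 - t) * y).
Proof.
  intros Hm x y t Hx Hy Ht.
  assert (HmR : 3 <= INR m) by (replace 3 with (INR 3) by (simpl; ring); apply le_INR; auto).
  set (b := / INR m).
  assert (Hb : 0 < b) by (unfold b; apply Rinv_0_lt_compat; lra).
  cut ((fun z => - Phi m b z) (t * x + (1 - t) * y) <=
       t * (fun z => - Phi m b z) x + (1 - t) * (fun z => - Phi m b z) y).
  { simpl. intros; lra. }
  apply (convex_of_deriv _ (fun z => - dPhi m b z)); auto.
  - intros z Hz. apply (is_derive_opp (Phi m b)). apply Phi_derive; auto.
  - apply (incr_of_deriv _ (fun z => - d2Phi m b z)).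
    + intros z Hz. apply (is_derive_opp (dPhi m b)). apply dPhi_derive; auto.
    + intros z Hz. unfold d2Phi.
      assert (E : (b + 1) * INR m = INR (S m)) by (unfold b; rewrite S_INR; field; lra).
      rewrite E. pose proof (T_CS m Hm z Hz).
      pose proof (Rpower_pos (T m z) (- b - 2)).
      assert (0 < INR (S m)) by (rewrite S_INR; lra).
      assert (0 <= b * INR m * Rpower (T m z) (- b - 2)) by (apply Rmult_le_pos; [apply Rmult_le_pos|]; lra).
      assert (INR (S m) * T (S m) z ^ 2 - INR (S m) * T m z * T (S (S m)) z <= 0).
      { replace (INR (S m) * T (S m) z ^ 2 - INR (S m) * T m z * T (S (S m)) z) with
          (INR (S m) * (T (S m) z ^ 2 - T m z * T (S (S m)) z)) by ring.
        assert (T (S m) z ^ 2 - T m z * T (S (S m)) z <= 0) by lra. nra. }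
      nra.
Qed.

Lemma F_convex (m : nat) : (3 <= m)%nat ->
  forall x y t, 0 < x -> 0 < y -> 0 < t < 1 ->
   Phi m (/ (INR m - 2)) (t * x + (1 - t) * y) <= t * Phi m (/ (INR m - 2)) x + (1 - t) * Phi m (/ (INR m - 2)) y.
Proof.
  intros Hm x y t Hx Hy Ht.
  assert (HmR : 3 <= INR m) by (replace 3 with (INR 3) by (simpl; ring); apply le_INR; auto).
  set (b := / (INR m - 2)).
  assert (Hb : 0 < b) by (unfold b; apply Rinv_0_lt_compat; lra).
  apply (convex_of_deriv _ (fun z => dPhi m b z)); auto.
  - intros z Hz. apply Phi_derive; auto.
  - apply (incr_of_deriv _ (fun z => d2Phi m b z)).
    + intros z Hz. apply dPhi_derive; auto.
    + intros z Hz. unfold d2Phi.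
      pose proof (key_ineq m z Hm Hz).
      pose proof (Rpower_pos (T m z) (- b - 2)).
      assert (0 <= b * INR m * Rpower (T m z) (- b - 2)) by (apply Rmult_le_pos; [apply Rmult_le_pos|]; lra).
      assert (0 <= (b + 1) * INR m * T (S m) z ^ 2 - INR (S m) * T m z * T (S (S m)) z).
      { replace ((b + 1) * INR m * T (S m) z ^ 2 - INR (S m) * T m z * T (S (S m)) z) with
          (b * ((INR m - 1) * INR m * T (S m) z ^ 2 - (INR m - 2) * (INR m + 1) * (T m z * T (S (S m)) z)))
          by (unfold b; rewrite S_INR; field; lra).
        apply Rmult_le_pos; lra. }
      nra.
Qed.

Lemma G_small (n : nat) (r e : R) : (3 <= n)%nat -> r < 0 -> 0 < e ->
  G n r e <= Rpower (INR (Factorial.fact n)) r * Rpower e (- INR (n + 1) * r).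
Proof.
  intros Hn Hr He. unfold G. rewrite base_eq.
  assert (Hc : 0 < INR (Factorial.fact n)) by apply INR_fact_lt_0.
  assert (HT := T_ge_first (n + 1) e ltac:(lia) He).
  assert (Hp : 0 < e ^ (n + 1)) by (apply pow_lt; auto).
  apply Rle_trans with (Rpower (INR (Factorial.fact n) * / e ^ (n + 1)) r).
  - apply Rpower_le_neg. lra. apply Rmult_lt_0_compat; auto. apply Rinv_0_lt_compat; auto.
    apply Rmult_le_compat_l; lra.
  - rewrite <- Rpower_mult_distr; auto. 2: apply Rinv_0_lt_compat; auto.
    apply Rmult_le_compat_l. left; apply Rpower_pos.
    right. rewrite <- (Rpower_pow (n + 1) e) by auto.
    rewrite <- Rpower_Ropp, Rpower_mult. f_equal; try ring.
Qed.

Theorem theorem3p5 (n : nat) (hn : (3 <= n)%nat) :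
  (forall r : R, (r < - / (INR n - 1) \/ 0 < r) ->
     strictly_convex_pos (G n r)) /\
  (forall r : R, - / (INR n + 1) < r < 0 ->
     strictly_concave_pos (G n r)) /\
  (forall r : R, r < - / (INR n - 1) ->
     forall x y : R, 0 < x -> 0 < y ->
       G n r x + G n r y < G n r (x + y)) /\
  (forall r : R, - / (INR n + 1) < r < 0 ->
     forall x y : R, 0 < x -> 0 < y ->
       G n r x + G n r y > G n r (x + y)).
Proof.
  assert (Hm : (3 <= n + 1)%nat) by lia.
  assert (HnR : 3 <= INR n) by (replace 3 with (INR 3) by (simpl; ring); apply le_INR; auto).
  assert (Em : INR (n + 1) = INR n + 1) by (rewrite plus_INR; simpl; ring).
  set (C := fun r => Rpower (INR (Factorial.fact n)) r).
  assert (HC : forall r, 0 < C r) by (intros; apply Rpower_pos).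
  assert (Cvx1 : forall r, r < - / (INR n - 1) -> strictly_convex_pos (G n r)).
  { intros r Hr x y t Hx Hy Hxy Ht.
    set (b := / (INR (n + 1) - 2)).
    assert (Hb : 0 < b) by (unfold b; rewrite Em; apply Rinv_0_lt_compat; lra).
    assert (Hmid : 0 < t * x + (1 - t) * y) by nra.
    rewrite !(G_eq n b r) by auto. fold (C r).
    assert (Hq : 1 < - r / b).
    { unfold b. rewrite Em. replace (INR n + 1 - 2) with (INR n - 1) by ring.
      assert (0 < INR n - 1) by lra.
      assert (r * (INR n - 1) < - 1).
      { apply (Rmult_lt_compat_r (INR n - 1)) in Hr; auto.
        replace (- / (INR n - 1) * (INR n - 1)) with (-1) in Hr by (field; lra). lra. }
      replace (- r / / (INR n - 1)) with (- (r * (INR n - 1))) by (field; lra). lra. }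
    assert (K := comp_convex_gt1 (Phi (n + 1) b) (fun z Hz => Rpower_pos _ _)
       (fun u v Hu Huv => Phi_inc (n + 1) b u v Hm Hb Hu Huv) (- r / b) Hq
       (F_convex (n + 1) Hm) x y t Hx Hy Hxy Ht).
    pose proof (HC r). nra. }
  assert (Cvx2 : forall r, 0 < r -> strictly_convex_pos (G n r)).
  { intros r Hr x y t Hx Hy Hxy Ht.
    set (b := / INR (n + 1)).
    assert (Hb : 0 < b) by (unfold b; rewrite Em; apply Rinv_0_lt_compat; lra).
    assert (Hmid : 0 < t * x + (1 - t) * y) by nra.
    rewrite !(G_eq n b r) by auto. fold (C r).
    assert (Hq : - r / b < 0).
    { unfold Rdiv. assert (0 < / b) by (apply Rinv_0_lt_compat; auto). nra. }
    assert (K := comp_concave_neg (Phi (n + 1) b) (fun z Hz => Rpower_pos _ _)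
       (fun u v Hu Huv => Phi_inc (n + 1) b u v Hm Hb Hu Huv) (- r / b) Hq
       (g_concave (n + 1) Hm) x y t Hx Hy Hxy Ht).
    pose proof (HC r). nra. }
  assert (Ccv : forall r, - / (INR n + 1) < r < 0 -> strictly_concave_pos (G n r)).
  { intros r Hr x y t Hx Hy Hxy Ht.
    set (b := / INR (n + 1)).
    assert (Hb : 0 < b) by (unfold b; rewrite Em; apply Rinv_0_lt_compat; lra).
    assert (Hmid : 0 < t * x + (1 - t) * y) by nra.
    rewrite !(G_eq n b r) by auto. fold (C r).
    assert (Hq : 0 < - r / b < 1).
    { unfold b. rewrite Em.
      replace (- r / / (INR n + 1)) with (- (r * (INR n + 1))) by (field; lra).
      destruct Hr as [Hr1 Hr2].
      apply (Rmult_lt_compat_r (INR n + 1)) in Hr1; [|lra].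
      replace (- / (INR n + 1) * (INR n + 1)) with (-1) in Hr1 by (field; lra).
      split; nra. }
    assert (K := comp_concave_01 (Phi (n + 1) b) (fun z Hz => Rpower_pos _ _)
       (fun u v Hu Huv => Phi_inc (n + 1) b u v Hm Hb Hu Huv) (- r / b) Hq
       (g_concave (n + 1) Hm) x y t Hx Hy Hxy Ht).
    pose proof (HC r). nra. }
  split; [|split; [|split]].
  - intros r [Hr|Hr]; [apply Cvx1 | apply Cvx2]; auto.
  - exact Ccv.
  - intros r Hr x y Hx Hy.
    assert (Hr0 : r < 0).
    { assert (0 < / (INR n - 1)) by (apply Rinv_0_lt_compat; lra). lra. }
    assert (Hs : 0 < - INR (n + 1) * r) by (rewrite Em; nra).
    exact (cvx_superadd (G n r) (fun e He => Rlt_le _ _ (Rpower_pos _ _)) (Cvx1 r Hr) (C r)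
      (- INR (n + 1) * r) (Rlt_le _ _ (HC r)) Hs (fun e He => G_small n r e hn Hr0 He) x y Hx Hy).
  - intros r Hr x y Hx Hy.
    exact (ccv_subadd (G n r) (fun e He => Rlt_le _ _ (Rpower_pos _ _)) (Ccv r Hr) x y Hx Hy).
Qed.
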